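(* There exist $\varepsilon_1>0$ and $C>0$ such that for all $\varepsilon\in(0,\varepsilon_1]$ the following holds. Consider an initial condition of the hard core system with $n_1=n_2=1$ with $h_\varepsilon(0)\in\mathcal V$ and $\varphi_1=0$ at time $0$; let $t_{1,\varepsilon}=\inf\{t>0:\varphi_{1,\varepsilon}(t)=0\}$, and let $z_0(t)$ be the unperturbed ($\varepsilon=0$) motion from $z_0(0)=z_\varepsilon(0)$ (in which $X,W,s_1,s_2$ stay constant and $\varphi_1,\varphi_2$ rotate with constant rates $s_1/(2X)$ and $s_2/(2(1-X))$). If $t_{1,\varepsilon}\le (T\wedge T_\varepsilon)/\varepsilon$, then \[ \sup_{0\le t\le t_{1,\varepsilon}}|z_0(t)-z_\varepsilon(t)|\le C\varepsilon \] (distance in the coordinates $z=(X,W,s_1,s_2,\varphi_1,\varphi_2)$, angles modulo $1$).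
   Context: Hard core piston system with $n_1=n_2=1$: a piston of mass $M$ at position $X\in(0,1)$ with velocity $V$, a gas particle of mass $m_1$ at $x_1\in[0,X]$ with velocity $v_1$ and one of mass $m_2$ at $x_2\in[X,1]$ with velocity $v_2$; particles move freely between collisions, gas particles collide elastically with walls at $0$ and $1$ and with the piston (conservation of momentum and kinetic energy); if both gas particles hit the piston simultaneously, the left collision is applied first. Set $\varepsilon=M^{-1/2}$, $W=V/\varepsilon$, $s_i=|v_i|$, slow variables $h=(X,W,s_1,s_2)$. Angle variables in $\mathbb R/\mathbb Z$: $\varphi_1=x_1/(2X)$ if $v_1>0$, $\varphi_1=1-x_1/(2X)$ if $v_1<0$; $\varphi_2=(1-x_2)/(2(1-X))$ if $v_2<0$, $\varphi_2=1-(1-x_2)/(2(1-X))$ if $v_2>0$ (piston collisions occur exactly when $\varphi_i=1/2$). $z_\varepsilon(t)=(h_\varepsilon(t),\varphi_{1,\varepsilon}(t),\varphi_{2,\varepsilon}(t))$ denotes the motion with $M=\varepsilon^{-2}$ (left continuous in $t$). Averaged field $\bar H(h)=\bigl(W,\ m_1s_1^2/X-m_2s_2^2/(1-X),\ -s_1W/X,\ s_2W/(1-X)\bigr)$; $\bar h$ solves $d\bar h/d\tau=\bar H(\bar h)$, $\bar h(0)=h_\varepsilon(0)$. $\mathcal V\subset\mathbb R^4$ is compact with $h\in\mathcal V\Rightarrow X\in A,W\in B,s_i\in C$ for compact $A\subset(0,1)$, $B\subset\mathbb R$, $C\subset(0,\infty)$. $T>0$ fixed; $T_\varepsilon=\inf\{\tau\ge0:\bar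 h(\tau)\notin\mathcal V\text{ or }h_\varepsilon(\tau/\varepsilon)\notin\mathcal V\}$. *)

(* Defs.v *)
From Stdlib Require Import Reals.
From Coquelicot Require Import Coquelicot.
Open Scope R_scope.

(** State of the hard core piston system with n1 = n2 = 1:
    piston position/velocity (X,V), left particle (x1,v1), right particle (x2,v2). *)
Record pstate := mkP { pX : R; pV : R; px1 : R; pv1 : R; px2 : R; pv2 : R }.

(** Velocities after an elastic collision of a particle (mass m, velocity v)
    with the piston (mass M, velocity V): conservation of momentum and
    kinetic energy. *)
Definition elast_v (m M v V : R) : R := ((m - M) * v + 2 * M * V) / (m + M).
Definition elast_V (m M v V : R) : R := ((M - m) * V + 2 * m * v) / (m + M).

(** Collision rules applied at an instant (state with pre-collision
    velocities). *)
Definition coll_left_wall (s : pstate) : pstate :=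
  if Req_EM_T (px1 s) 0 then
    if Rlt_dec (pv1 s) 0 then mkP (pX s) (pV s) (px1 s) (- pv1 s) (px2 s) (pv2 s)
    else s
  else s.

Definition coll_left_piston (m1 M : R) (s : pstate) : pstate :=
  if Req_EM_T (px1 s) (pX s) then
    if Rlt_dec (pV s) (pv1 s) then
      mkP (pX s) (elast_V m1 M (pv1 s) (pV s)) (px1 s) (elast_v m1 M (pv1 s) (pV s))
          (px2 s) (pv2 s)
    else s
  else s.

Definition coll_right_piston (m2 M : R) (s : pstate) : pstate :=
  if Req_EM_T (px2 s) (pX s) then
    if Rlt_dec (pv2 s) (pV s) then
      mkP (pX s) (elast_V m2 M (pv2 s) (pV s)) (px1 s) (pv1 s)
          (px2 s) (elast_v m2 M (pv2 s) (pV s))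
    else s
  else s.

Definition coll_right_wall (s : pstate) : pstate :=
  if Req_EM_T (px2 s) 1 then
    if Rlt_dec 0 (pv2 s) then mkP (pX s) (pV s) (px1 s) (pv1 s) (px2 s) (- pv2 s)
    else s
  else s.

Definition coll (m1 m2 M : R) (s : pstate) : pstate :=
  coll_right_wall (coll_right_piston m2 M (coll_left_piston m1 M (coll_left_wall s))).

Definition free (tau : R) (s : pstate) : pstate :=
  mkP (pX s + tau * pV s) (pV s) (px1 s + tau * pv1 s) (pv1 s)
      (px2 s + tau * pv2 s) (pv2 s).

(** z : [0,oo) -> pstate is a (left continuous) motion of the hard core
    system with masses m1, m2 (gas particles) and M (piston): at every time
    the motion continues for a short while as free motion from the
    post-collision state, and just before every positive time it is free
    motion ending at the (pre-collision) state z t. *)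
Definition is_motion (m1 m2 M : R) (z : R -> pstate) : Prop :=
  (forall t, 0 <= t -> exists d, 0 < d /\
     forall s, t < s <= t + d -> z s = free (s - t) (coll m1 m2 M (z t))) /\
  (forall t, 0 < t -> exists d, 0 < d /\
     forall s, 0 <= s -> t - d < s <= t -> z s = free (s - t) (z t)).

Definition admissible (s : pstate) : Prop :=
  0 <= px1 s <= pX s /\ pX s <= px2 s <= 1.

Definition slow := (R * R * R * R)%type.
Definition hX (h : slow) : R := fst (fst (fst h)).
Definition hW (h : slow) : R := snd (fst (fst h)).
Definition hs1 (h : slow) : R := snd (fst h).
Definition hs2 (h : slow) : R := snd h.

Definition hstate (eps : R) (s : pstate) : slow :=
  (pX s, pV s / eps, Rabs (pv1 s), Rabs (pv2 s)).

(** Angle variables (real representatives in [0,1], understood mod 1).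
    Convention for a zero velocity: the first branch is used for v1 = 0,
    the first branch (v2 <= 0) for v2 = 0. *)
Definition phi1 (s : pstate) : R :=
  if Rle_dec 0 (pv1 s) then px1 s / (2 * pX s) else 1 - px1 s / (2 * pX s).
Definition phi2 (s : pstate) : R :=
  if Rle_dec (pv2 s) 0 then (1 - px2 s) / (2 * (1 - pX s))
  else 1 - (1 - px2 s) / (2 * (1 - pX s)).

Definition angle0 (a : R) : Prop := frac_part a = 0.

Definition dcirc (a b : R) : R :=
  Rmin (frac_part (a - b)) (1 - frac_part (a - b)).

Definition Hbar (m1 m2 : R) (h : slow) : slow :=
  (hW h,
   m1 * (hs1 h)^2 / hX h - m2 * (hs2 h)^2 / (1 - hX h),
   - hs1 h * hW h / hX h,
   hs2 h * hW h / (1 - hX h)).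

Definition solves_avg (m1 m2 : R) (hbar : R -> slow) (h0 : slow) : Prop :=
  hbar 0 = h0 /\
  forall tau, 0 <= tau ->
    is_derive (fun u => hX (hbar u)) tau (hX (Hbar m1 m2 (hbar tau))) /\
    is_derive (fun u => hW (hbar u)) tau (hW (Hbar m1 m2 (hbar tau))) /\
    is_derive (fun u => hs1 (hbar u)) tau (hs1 (Hbar m1 m2 (hbar tau))) /\
    is_derive (fun u => hs2 (hbar u)) tau (hs2 (Hbar m1 m2 (hbar tau))).

(** Distance |z0(t) - z_eps(t)| in the coordinates
    z = (X, W, s1, s2, phi1, phi2) (max norm, angles mod 1), where z0 is the
    unperturbed motion started at z_eps(0) = state s0. *)
Definition zdist (eps : R) (s0 : pstate) (t : R) (st : pstate) : R :=
  let h0 := hstate eps s0 in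
  let h := hstate eps st in
  Rmax (Rmax (Rmax (Rabs (hX h - hX h0)) (Rabs (hW h - hW h0)))
             (Rmax (Rabs (hs1 h - hs1 h0)) (Rabs (hs2 h - hs2 h0))))
       (Rmax (dcirc (phi1 st) (phi1 s0 + hs1 h0 / (2 * hX h0) * t))
             (dcirc (phi2 st) (phi2 s0 + hs2 h0 / (2 * (1 - hX h0)) * t))).

Definition t1_eps (z : R -> pstate) : Rbar :=
  Glb_Rbar (fun t => 0 < t /\ angle0 (phi1 (z t))).

Definition T_eps (eps : R) (Vs : slow -> Prop) (hbar : R -> slow)
  (z : R -> pstate) : Rbar :=
  Glb_Rbar (fun tau => 0 <= tau /\
    (~ Vs (hbar tau) \/ ~ Vs (hstate eps (z (tau / eps))))).

From mathcomp Require Import all_boot all_classical Rstruct Rstruct_topology topology.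

Definition compactR (A : R -> Prop) : Prop := compact A.
Definition compact4 (V : slow -> Prop) : Prop := compact V.

(* Main.v *)
Require Import Defs.
From Stdlib Require Import Reals.
From Coquelicot Require Import Coquelicot.
Open Scope R_scope.
From Stdlib Require Import Lra Lia Classical.

Module Aux.
From mathcomp Require Import all_boot all_order all_algebra all_classical all_reals Rstruct Rstruct_topology topology normedtype derive.
Import Order.TTheory GRing.Theory Num.Theory.
Local Open Scope classical_set_scope. Local Open Scope ring_scope.

Lemma compact_minmax (A : R -> Prop) : compactR A -> (exists x, A x) ->
  exists lo hi, A lo /\ A hi /\ forall x, A x -> Rle lo x /\ Rle x hi.
Proof.
move=> cA [x0 Ax0].
have A0 : A !=set0 by exists x0.
have cid : {within A, continuous (fun x : R => x)}.
  by apply: continuous_subspaceT => x; exact: cvg_id.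
have [c cA' cmin] := compact_EVT_min A0 cA cid.
have [d dA' dmax] := compact_EVT_max A0 cA cid.
exists c, d; rewrite inE in cA'; rewrite inE in dA'; split => //; split => // x Ax.
have xA : x \in (A : set R) by rewrite inE.
by split; apply/RleP; [exact: cmin | exact: dmax].
Qed.
End Aux.



Lemma RI (a b : R) (P : R -> Prop) :
  a <= b -> P a ->
  (forall s, a <= s < b -> P s -> exists d, 0 < d /\ forall u, s < u <= s + d -> u <= b -> P u) ->
  (forall s, a < s <= b -> (forall u, a <= u < s -> P u) -> P s) ->
  P b.
Proof.
  intros hab Pa Hr Hl.
  set (E := fun x => a <= x <= b /\ forall y, a <= y <= x -> P y).
  assert (bE : bound E) by (exists b; intros x [Hx _]; lra).
  assert (nE : exists x, E x).
  { exists a; split; [lra|]. intros y Hy. replace y with a by lra. exact Pa. }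
  destruct (completeness E bE nE) as [m [Hub Hlub]].
  assert (am : a <= m) by (apply Hub; split; [lra|]; intros y Hy; replace y with a by lra; exact Pa).
  assert (mb : m <= b) by (apply Hlub; intros x [Hx _]; lra).
  assert (Hbel : forall y, a <= y < m -> P y).
  { intros y Hy. destruct (Classical_Prop.classic (exists x, E x /\ y < x)) as [[x [[Hx1 Hx2] Hyx]]|Hn].
    - apply Hx2; lra.
    - exfalso. assert (m <= y). { apply Hlub. intros x Ex. destruct (Rle_dec x y); auto.
        exfalso; apply Hn; exists x; split; [exact Ex|]; apply Rnot_le_lt; assumption. } lra. }
  assert (Pm : P m).
  { destruct (Req_dec m a) as [e|ne]. rewrite e; exact Pa. apply Hl; [split; [destruct am; [auto|congruence]|auto]|]. exact Hbel. }
  destruct (Req_dec m b) as [e|ne]. rewrite <- e; exact Pm.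
  assert (mlb : m < b) by (destruct mb; [auto|contradiction]).
  exfalso. destruct (Hr m (conj am mlb) Pm) as [d [dp Hd]].
  set (u := m + Rmin d (b - m)).
  assert (Eu : E u).
  { unfold u. split. split; [assert (0 < Rmin d (b - m)) by (apply Rmin_pos; lra); lra|].
    assert (Rmin d (b - m) <= b - m) by apply Rmin_r; lra.
    intros y Hy. destruct (Rle_lt_dec y m).
    - destruct (Req_dec y m). subst y; exact Pm. apply Hbel; lra.
    - apply Hd. assert (Rmin d (b - m) <= d) by apply Rmin_l. lra.
      assert (Rmin d (b - m) <= b - m) by apply Rmin_r. lra. }
  assert (u <= m) by (apply Hub; exact Eu).
  unfold u in *. assert (0 < Rmin d (b - m)) by (apply Rmin_pos; lra). lra.
Qed.

Lemma pick_left (a s d : R) : a < s -> 0 < d ->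
  exists u, a <= u < s /\ s - d < u.
Proof.
  intros h1 h2. exists (Rmax a (s - d / 2)).
  destruct (Rle_dec a (s - d/2)).
  - rewrite Rmax_right by lra. lra.
  - rewrite Rmax_left by lra. lra.
Qed.

Lemma lip_jump (a b L J0 J dl : R) (f : R -> R) (Jt : R -> Prop) :
  a <= b -> 0 <= L -> 0 <= J0 -> 0 <= J -> 0 < dl ->
  (forall c c', a < c -> c < c' -> c' < b -> Jt c -> Jt c' -> c + dl <= c') ->
  (forall s, a <= s < b -> exists d j, 0 < d /\ 0 <= j /\
      (j = 0 \/ (s = a /\ j <= J0) \/ (a < s /\ Jt s /\ j <= J)) /\
      forall u, s < u <= s + d -> Rabs (f u - f s) <= L * (u - s) + j) ->
  (forall s, a < s <= b -> exists d, 0 < d /\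
      forall u, s - d < u < s -> Rabs (f s - f u) <= L * (s - u)) ->
  Rabs (f b - f a) <= L * (b - a) + J0 + J + J * (1 + (b - a) / dl).
Proof.
  intros hab hL hJ0 hJ hdl Hsep Hr Hl.
  set (P := fun u => a <= u /\ (Rabs (f u - f a) <= L * (u - a) + J0 + J \/
     exists c, a < c < u /\ Jt c /\
       Rabs (f u - f a) <= L * (u - a) + J0 + J + J * (1 + (c - a) / dl))).
  assert (Pb : P b).
  { apply (RI a b P); auto.
    - split; [lra|left]. replace (f a - f a) with 0 by ring. rewrite Rabs_R0; lra.
    - intros s Hs [_ Ps]. destruct (Hr s Hs) as [d [j [dp [jp [Hj Hd]]]]].
      exists d; split; auto. intros u Hu Hub. split; [lra|].
      assert (Hfu := Hd u Hu).
      assert (tri : Rabs (f u - f a) <= Rabs (f u - f s) + Rabs (f s - f a)).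
      { replace (f u - f a) with ((f u - f s) + (f s - f a)) by ring. apply Rabs_triang. }
      destruct Ps as [P1|[c [Hc [Jc P2]]]].
      + destruct Hj as [j0|[[sa jJ0]|[sa [Js jJ]]]].
        * left. subst j. nra.
        * left. subst s. replace (f a - f a) with 0 in P1 by ring. nra.
        * right. exists s. split; [lra|]. split; auto.
          assert (0 <= (s - a) / dl) by (apply Rmult_le_pos; [lra|left; apply Rinv_0_lt_compat; lra]). nra.
      + destruct Hj as [j0|[[sa jJ0]|[sa [Js jJ]]]].
        * right. exists c. split; [lra|]. split; auto. subst j. nra.
        * lra.
        * right. exists s. split; [lra|]. split; auto.
          assert (cs := Hsep c s ltac:(lra) ltac:(lra) ltac:(lra) Jc Js).
          assert ((c - a) / dl + 1 <= (s - a) / dl).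
          { apply (Rmult_le_reg_r dl); auto. unfold Rdiv.
            rewrite Rmult_plus_distr_r, !Rmult_assoc, Rinv_l by lra. lra. }
          nra.
    - intros s Hs Hbel. destruct (Hl s Hs) as [d [dp Hd]].
      destruct (pick_left a s d ltac:(lra) dp) as [u [Hu1 Hu2]].
      destruct (Hbel u Hu1) as [_ Pu]. assert (Hfu := Hd u ltac:(lra)).
      assert (tri : Rabs (f s - f a) <= Rabs (f s - f u) + Rabs (f u - f a)).
      { replace (f s - f a) with ((f s - f u) + (f u - f a)) by ring. apply Rabs_triang. }
      split; [lra|]. destruct Pu as [P1|[c [Hc [Jc P2]]]].
      + left. nra.
      + right. exists c. split; [lra|]. split; auto. nra. }
  destruct Pb as [_ [P1|[c [Hc [Jc P2]]]]].
  - assert (0 <= (b - a) / dl) by (apply Rmult_le_pos; [lra|left; apply Rinv_0_lt_compat; lra]). nra.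
  - assert ((c - a) / dl <= (b - a) / dl).
    { unfold Rdiv. apply Rmult_le_compat_r. left; apply Rinv_0_lt_compat; lra. lra. }
    nra.
Qed.

Lemma ang (a b w L : R) (f : R -> R) (Pk : R -> Prop) :
  Pk 0 -> (forall x y, Pk x -> Pk y -> Pk (x + y)) -> a <= b ->
  (forall s, a <= s < b -> exists d k, 0 < d /\ Pk k /\
     forall u, s < u <= s + d -> Rabs (f u - f s - k - w * (u - s)) <= L * (u - s)) ->
  (forall s, a < s <= b -> exists d, 0 < d /\
     forall u, s - d < u < s -> Rabs (f s - f u - w * (s - u)) <= L * (s - u)) ->
  exists k, Pk k /\ Rabs (f b - f a - k - w * (b - a)) <= L * (b - a).
Proof.
  intros P0 Padd hab Hr Hl.
  apply (RI a b (fun u => exists k, Pk k /\ Rabs (f u - f a - k - w * (u - a)) <= L * (u - a))); auto.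
  - exists 0; split; auto. replace (f a - f a - 0 - w * (a - a)) with 0 by ring.
    rewrite Rabs_R0; lra.
  - intros s Hs [k [Pk1 Hk]]. destruct (Hr s Hs) as [d [k2 [dp [Pk2 Hd]]]].
    exists d; split; auto. intros u Hu _. exists (k + k2); split; auto.
    assert (H := Hd u Hu).
    replace (f u - f a - (k + k2) - w * (u - a)) with
      ((f u - f s - k2 - w * (u - s)) + (f s - f a - k - w * (s - a))) by ring.
    eapply Rle_trans; [apply Rabs_triang|]. lra.
  - intros s Hs Hbel. destruct (Hl s Hs) as [d [dp Hd]].
    destruct (pick_left a s d ltac:(lra) dp) as [u [Hu1 Hu2]].
    destruct (Hbel u Hu1) as [k [Pk1 Hk]]. exists k; split; auto.
    assert (H := Hd u ltac:(lra)).
    replace (f s - f a - k - w * (s - a)) with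
      ((f s - f u - w * (s - u)) + (f u - f a - k - w * (u - a))) by ring.
    eapply Rle_trans; [apply Rabs_triang|]. lra.
Qed.

Lemma lc_ge (s d a x r : R) : 0 < d ->
  (forall u, s - d < u < s -> a <= x + (u - s) * r) -> a <= x.
Proof.
  intros dp H. destruct (Rle_dec a x) as [h|h]; auto. exfalso.
  set (e := Rmin (d / 2) ((a - x) / (2 * (Rabs r + 1)))).
  assert (ep : 0 < e). { unfold e; apply Rmin_pos. lra. apply Rdiv_lt_0_compat. lra.
    pose proof (Rabs_pos r); lra. }
  assert (e1 : e <= d / 2) by apply Rmin_l.
  assert (e2 : e <= (a - x) / (2 * (Rabs r + 1))) by apply Rmin_r.
  assert (Hu := H (s - e) ltac:(lra)).
  assert (e * (Rabs r + 1) <= (a - x) / 2).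
  { pose proof (Rabs_pos r).
    apply Rmult_le_compat_r with (r := Rabs r + 1) in e2; [|lra].
    replace ((a - x) / (2 * (Rabs r + 1)) * (Rabs r + 1)) with ((a - x) / 2) in e2 by (field; lra). lra. }
  assert ((s - e - s) * r <= e * Rabs r).
  { replace (s - e - s) with (- e) by ring.
    destruct (Rle_dec 0 r). rewrite Rabs_right by lra. nra. rewrite Rabs_left by lra. nra. }
  pose proof (Rabs_pos r). apply Rnot_le_lt in h. nra.
Qed.

Lemma lc_le (s d a x r : R) : 0 < d ->
  (forall u, s - d < u < s -> x + (u - s) * r <= a) -> x <= a.
Proof.
  intros dp H. assert (- a <= - x); [|lra].
  apply (lc_ge s d (-a) (-x) (-r) dp). intros u Hu. specialize (H u Hu). lra.
Qed.


Lemma clw_cases s :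
  (px1 s = 0 /\ pv1 s < 0 /\ coll_left_wall s = mkP (pX s) (pV s) (px1 s) (- pv1 s) (px2 s) (pv2 s))
  \/ (coll_left_wall s = s /\ (px1 s = 0 -> 0 <= pv1 s)).
Proof.
  unfold coll_left_wall. destruct (Req_EM_T (px1 s) 0); destruct (Rlt_dec (pv1 s) 0); auto;
  right; split; auto; intros; lra.
Qed.

Lemma clp_cases m M s :
  (px1 s = pX s /\ pV s < pv1 s /\ coll_left_piston m M s =
     mkP (pX s) (elast_V m M (pv1 s) (pV s)) (px1 s) (elast_v m M (pv1 s) (pV s)) (px2 s) (pv2 s))
  \/ (coll_left_piston m M s = s /\ (px1 s = pX s -> pv1 s <= pV s)).
Proof.
  unfold coll_left_piston. destruct (Req_EM_T (px1 s) (pX s)); destruct (Rlt_dec (pV s) (pv1 s)); auto;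
  right; split; auto; intros; lra.
Qed.

Lemma crp_cases m M s :
  (px2 s = pX s /\ pv2 s < pV s /\ coll_right_piston m M s =
     mkP (pX s) (elast_V m M (pv2 s) (pV s)) (px1 s) (pv1 s) (px2 s) (elast_v m M (pv2 s) (pV s)))
  \/ (coll_right_piston m M s = s /\ (px2 s = pX s -> pV s <= pv2 s)).
Proof.
  unfold coll_right_piston. destruct (Req_EM_T (px2 s) (pX s)); destruct (Rlt_dec (pv2 s) (pV s)); auto;
  right; split; auto; intros; lra.
Qed.

Lemma crw_cases s :
  (px2 s = 1 /\ 0 < pv2 s /\ coll_right_wall s = mkP (pX s) (pV s) (px1 s) (pv1 s) (px2 s) (- pv2 s))
  \/ (coll_right_wall s = s /\ (px2 s = 1 -> pv2 s <= 0)).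
Proof.
  unfold coll_right_wall. destruct (Req_EM_T (px2 s) 1); destruct (Rlt_dec 0 (pv2 s)); auto;
  right; split; auto; intros; lra.
Qed.

Ltac stages :=
  unfold coll;
  match goal with |- context [coll_left_wall ?x] =>
    let a := fresh "a" in let b := fresh "b" in let e := fresh "e" in let n := fresh "n" in
    destruct (clw_cases x) as [[a [b e]]|[e n]]; rewrite e; clear e; cbn [pX pV px1 pv1 px2 pv2] in * end;
  match goal with |- context [coll_left_piston ?m ?M ?x] =>
    let a := fresh "a" in let b := fresh "b" in let e := fresh "e" in let n := fresh "n" in
    destruct (clp_cases m M x) as [[a [b e]]|[e n]]; rewrite e; clear e; cbn [pX pV px1 pv1 px2 pv2] in * end;
  match goal with |- context [coll_right_piston ?m ?M ?x] =>
    let a := fresh "a" in let b := fresh "b" in let e := fresh "e" in let n := fresh "n" in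
    destruct (crp_cases m M x) as [[a [b e]]|[e n]]; rewrite e; clear e; cbn [pX pV px1 pv1 px2 pv2] in * end;
  match goal with |- context [coll_right_wall ?x] =>
    let a := fresh "a" in let b := fresh "b" in let e := fresh "e" in let n := fresh "n" in
    destruct (crw_cases x) as [[a [b e]]|[e n]]; rewrite e; clear e; cbn [pX pV px1 pv1 px2 pv2] in * end.

Lemma coll_pos m1 m2 M st :
  pX (coll m1 m2 M st) = pX st /\ px1 (coll m1 m2 M st) = px1 st /\ px2 (coll m1 m2 M st) = px2 st.
Proof. stages; auto. Qed.

Lemma el_rel m M v V : 0 < m -> 0 < M -> elast_v m M v V - elast_V m M v V = - (v - V).
Proof. intros; unfold elast_v, elast_V; field; lra. Qed.
Lemma el_mom m M v V : 0 < m -> 0 < M -> m * elast_v m M v V + M * elast_V m M v V = m * v + M * V.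
Proof. intros; unfold elast_v, elast_V; field; lra. Qed.

Lemma frac_le m M : 0 < m -> 0 < M -> m / (m + M) <= m / M.
Proof. intros. apply Rmult_le_compat_l; [lra|]. apply Rinv_le_contravar; lra. Qed.
Lemma frac_le1 m M : 0 < m -> 0 < M -> M / (m + M) <= 1.
Proof. intros. apply (Rmult_le_reg_r (m + M)); [lra|]. unfold Rdiv.
  rewrite Rmult_assoc, Rinv_l by lra. lra. Qed.

Lemma el_v_bound m eps v V : 0 < m -> 0 < eps ->
  Rabs (elast_v m (/ eps ^ 2) v V + v) <= 2 * m * eps ^ 2 * Rabs v + 2 * Rabs V.
Proof.
  intros hm he. set (M := / eps ^ 2). assert (hM : 0 < M) by (unfold M; apply Rinv_0_lt_compat; nra).
  assert (eq : elast_v m M v V + v = 2 * (m / (m + M)) * v + 2 * (M / (m + M)) * V)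
    by (unfold elast_v; field; lra).
  rewrite eq. assert (h1 := frac_le m M hm hM). assert (h2 := frac_le1 m M hm hM).
  assert (m / M = m * eps ^ 2) by (unfold M; field; lra).
  assert (0 <= m / (m + M)) by (apply Rmult_le_pos; [lra| left; apply Rinv_0_lt_compat; lra]).
  assert (0 <= M / (m + M)) by (apply Rmult_le_pos; [lra| left; apply Rinv_0_lt_compat; lra]).
  eapply Rle_trans; [apply Rabs_triang|]. rewrite !Rabs_mult.
  rewrite (Rabs_right 2) by lra. rewrite (Rabs_right (m / (m + M))) by lra.
  rewrite (Rabs_right (M / (m + M))) by lra.
  pose proof (Rabs_pos v); pose proof (Rabs_pos V). nra.
Qed.

Lemma el_V_bound m eps v V : 0 < m -> 0 < eps ->
  Rabs (elast_V m (/ eps ^ 2) v V - V) <= 2 * m * eps ^ 2 * (Rabs v + Rabs V).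
Proof.
  intros hm he. set (M := / eps ^ 2). assert (hM : 0 < M) by (unfold M; apply Rinv_0_lt_compat; nra).
  assert (eq : elast_V m M v V - V = 2 * (m / (m + M)) * (v - V))
    by (unfold elast_V; field; lra).
  rewrite eq. assert (h1 := frac_le m M hm hM).
  assert (m / M = m * eps ^ 2) by (unfold M; field; lra).
  assert (0 <= m / (m + M)) by (apply Rmult_le_pos; [lra| left; apply Rinv_0_lt_compat; lra]).
  rewrite !Rabs_mult. rewrite (Rabs_right 2) by lra. rewrite (Rabs_right (m / (m + M))) by lra.
  assert (Rabs (v - V) <= Rabs v + Rabs V).
  { unfold Rminus. eapply Rle_trans; [apply Rabs_triang|]. rewrite Rabs_Ropp. lra. }
  pose proof (Rabs_pos (v - V)). nra.
Qed.

Lemma abs_diff_le a b : Rabs (Rabs a - Rabs b) <= Rabs (a + b).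
Proof.
  unfold Rabs; repeat destruct Rcase_abs; lra.
Qed.

Definition MM eps := / eps ^ 2.

Lemma coll_v1_same m1 m2 eps st :
  px1 st <> 0 -> px1 st <> pX st -> pv1 (coll m1 m2 (MM eps) st) = pv1 st.
Proof. intros h1 h2. unfold MM. stages; auto; try lra. Qed.

Lemma coll_v2_same m1 m2 eps st :
  px2 st <> 1 -> px2 st <> pX st -> pv2 (coll m1 m2 (MM eps) st) = pv2 st.
Proof. intros h1 h2. unfold MM. stages; auto; try lra. Qed.

Lemma coll_s1 m1 m2 eps st : 0 < m1 -> 0 < eps -> 0 < pX st ->
  Rabs (Rabs (pv1 (coll m1 m2 (MM eps) st)) - Rabs (pv1 st)) <= 2*m1*eps^2*Rabs (pv1 st) + 2*Rabs (pV st).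
Proof.
  intros hm he hX. assert (0 <= 2*m1*eps^2*Rabs (pv1 st) + 2*Rabs (pV st)).
  { pose proof (Rabs_pos (pv1 st)); pose proof (Rabs_pos (pV st)). assert (0 < eps^2) by (apply pow_lt; lra).
    assert (0 <= m1*eps^2*Rabs (pv1 st)) by (apply Rmult_le_pos; [apply Rmult_le_pos|]; lra). lra. }
  unfold MM. stages; try (exfalso; lra);
  try (rewrite ?Rabs_Ropp; unfold Rminus; rewrite Rplus_opp_r, Rabs_R0; lra);
  try (eapply Rle_trans; [apply abs_diff_le|]; apply el_v_bound; lra).
Qed.

Lemma el_V_abs m eps v V : 0 < m -> 0 < eps ->
  Rabs (elast_V m (/ eps ^ 2) v V) <= Rabs V + 2 * m * eps ^ 2 * (Rabs v + Rabs V).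
Proof.
  intros. assert (h := el_V_bound m eps v V H H0).
  replace (elast_V m (/ eps ^ 2) v V) with ((elast_V m (/ eps ^ 2) v V - V) + V) by ring.
  eapply Rle_trans; [apply Rabs_triang|]. lra.
Qed.

Lemma coll_s2 m1 m2 eps st : 0 < m1 -> 0 < m2 -> 0 < eps -> 0 < pX st < 1 ->
  Rabs (Rabs (pv2 (coll m1 m2 (MM eps) st)) - Rabs (pv2 st)) <=
    2*m2*eps^2*Rabs (pv2 st) + 2*(Rabs (pV st) + 2*m1*eps^2*(Rabs (pv1 st) + Rabs (pV st))).
Proof.
  intros hm1 hm2 he hX.
  assert (e2 : 0 < eps^2) by (apply pow_lt; lra).
  pose proof (Rabs_pos (pv1 st)); pose proof (Rabs_pos (pV st)); pose proof (Rabs_pos (pv2 st)).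
  assert (0 <= m1*eps^2*(Rabs (pv1 st) + Rabs (pV st))) by (apply Rmult_le_pos; [apply Rmult_le_pos|]; lra).
  assert (0 <= m2*eps^2*Rabs (pv2 st)) by (apply Rmult_le_pos; [apply Rmult_le_pos|]; lra).
  unfold MM. stages; try (exfalso; lra);
  try (rewrite ?Rabs_Ropp; unfold Rminus; rewrite Rplus_opp_r, Rabs_R0; lra);
  try (eapply Rle_trans; [apply abs_diff_le|];
   eapply Rle_trans; [apply el_v_bound; lra|];
   try (assert (hh := el_V_abs m1 eps (pv1 st) (pV st) hm1 he)); lra).
Qed.

Definition Qf eps m1 m2 st := pV st / eps + eps * (m1 * pv1 st + m2 * pv2 st).

Lemma Q_clp eps m1 m2 s : 0 < m1 -> 0 < eps ->
  Qf eps m1 m2 (coll_left_piston m1 (MM eps) s) = Qf eps m1 m2 s.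
Proof.
  intros. unfold MM. destruct (clp_cases m1 (/ eps ^ 2) s) as [[a [b e]]|[e n]]; rewrite e; auto.
  unfold Qf; cbn [pX pV px1 pv1 px2 pv2]. unfold elast_v, elast_V.
  assert (0 < eps ^ 2) by (apply pow_lt; lra). field.
  split; [lra|]. nra.
Qed.

Lemma Q_crp eps m1 m2 s : 0 < m2 -> 0 < eps ->
  Qf eps m1 m2 (coll_right_piston m2 (MM eps) s) = Qf eps m1 m2 s.
Proof.
  intros. unfold MM. destruct (crp_cases m2 (/ eps ^ 2) s) as [[a [b e]]|[e n]]; rewrite e; auto.
  unfold Qf; cbn [pX pV px1 pv1 px2 pv2]. unfold elast_v, elast_V.
  assert (0 < eps ^ 2) by (apply pow_lt; lra). field.
  split; [lra|]. nra.
Qed.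

Lemma Q_clw eps m1 m2 s : 0 < m1 -> 0 < eps ->
  Rabs (Qf eps m1 m2 (coll_left_wall s) - Qf eps m1 m2 s) <= 2 * eps * m1 * Rabs (pv1 s) /\
  (px1 s <> 0 -> Qf eps m1 m2 (coll_left_wall s) = Qf eps m1 m2 s).
Proof.
  intros. destruct (clw_cases s) as [[a [b e]]|[e n]]; rewrite e.
  - split; [|intros; lra]. unfold Qf; cbn [pX pV px1 pv1 px2 pv2].
    replace (pV s / eps + eps * (m1 * - pv1 s + m2 * pv2 s) - (pV s / eps + eps * (m1 * pv1 s + m2 * pv2 s)))
      with (2 * eps * m1 * (- pv1 s)) by ring.
    rewrite Rabs_mult, Rabs_Ropp. rewrite (Rabs_right (2*eps*m1)) by nra. lra.
  - split; auto. unfold Rminus; rewrite Rplus_opp_r, Rabs_R0.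
    pose proof (Rabs_pos (pv1 s)). apply Rmult_le_pos; [|lra]. assert (0 < 2*eps*m1) by (apply Rmult_lt_0_compat; lra). lra.
Qed.

Lemma Q_crw eps m1 m2 s : 0 < m2 -> 0 < eps ->
  Rabs (Qf eps m1 m2 (coll_right_wall s) - Qf eps m1 m2 s) <= 2 * eps * m2 * Rabs (pv2 s) /\
  (px2 s <> 1 -> Qf eps m1 m2 (coll_right_wall s) = Qf eps m1 m2 s).
Proof.
  intros. destruct (crw_cases s) as [[a [b e]]|[e n]]; rewrite e.
  - split; [|intros; lra]. unfold Qf; cbn [pX pV px1 pv1 px2 pv2].
    replace (pV s / eps + eps * (m1 * pv1 s + m2 * - pv2 s) - (pV s / eps + eps * (m1 * pv1 s + m2 * pv2 s)))
      with (2 * eps * m2 * (- pv2 s)) by ring.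
    rewrite Rabs_mult, Rabs_Ropp. rewrite (Rabs_right (2*eps*m2)) by nra. lra.
  - split; auto. unfold Rminus; rewrite Rplus_opp_r, Rabs_R0.
    pose proof (Rabs_pos (pv2 s)). apply Rmult_le_pos; [|lra]. assert (0 < 2*eps*m2) by (apply Rmult_lt_0_compat; lra). lra.
Qed.

Lemma clw_pos s : pX (coll_left_wall s) = pX s /\ px1 (coll_left_wall s) = px1 s /\ px2 (coll_left_wall s) = px2 s /\ pv2 (coll_left_wall s) = pv2 s /\ Rabs (pv1 (coll_left_wall s)) = Rabs (pv1 s).
Proof. destruct (clw_cases s) as [[a [b e]]|[e n]]; rewrite e; cbn; auto. rewrite Rabs_Ropp; auto. Qed.
Lemma clp_pos m M s : pX (coll_left_piston m M s) = pX s /\ px1 (coll_left_piston m M s) = px1 s /\ px2 (coll_left_piston m M s) = px2 s /\ pv2 (coll_left_piston m M s) = pv2 s.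
Proof. destruct (clp_cases m M s) as [[a [b e]]|[e n]]; rewrite e; cbn; auto. Qed.
Lemma crp_pos m M s : pX (coll_right_piston m M s) = pX s /\ px1 (coll_right_piston m M s) = px1 s /\ px2 (coll_right_piston m M s) = px2 s /\ (px2 s <> pX s -> pv2 (coll_right_piston m M s) = pv2 s).
Proof. destruct (crp_cases m M s) as [[a [b e]]|[e n]]; rewrite e; cbn; auto. intuition. Qed.

Lemma coll_Q m1 m2 eps st : 0 < m1 -> 0 < m2 -> 0 < eps -> 0 < pX st < 1 ->
  Rabs (Qf eps m1 m2 (coll m1 m2 (MM eps) st) - Qf eps m1 m2 st) <=
     2*eps*m1*Rabs (pv1 st) + 2*eps*m2*Rabs (pv2 st) /\
  (px1 st <> 0 -> Rabs (Qf eps m1 m2 (coll m1 m2 (MM eps) st) - Qf eps m1 m2 st) <=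
     2*eps*m2*Rabs (pv2 st)) /\
  (px1 st <> 0 -> px2 st <> 1 -> Qf eps m1 m2 (coll m1 m2 (MM eps) st) = Qf eps m1 m2 st).
Proof.
  intros hm1 hm2 he hX. unfold coll.
  set (s1 := coll_left_wall st). set (s2 := coll_left_piston m1 (MM eps) s1).
  set (s3 := coll_right_piston m2 (MM eps) s2).
  destruct (Q_clw eps m1 m2 st hm1 he) as [w1 w1']. fold s1 in w1, w1'.
  assert (q2 : Qf eps m1 m2 s2 = Qf eps m1 m2 s1) by (apply Q_clp; auto).
  assert (q3 : Qf eps m1 m2 s3 = Qf eps m1 m2 s2) by (apply Q_crp; auto).
  destruct (Q_crw eps m1 m2 s3 hm2 he) as [w4 w4'].
  destruct (clw_pos st) as [p1 [p2 [p3 [p4 p5]]]].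
  destruct (clp_pos m1 (MM eps) s1) as [r1 [r2 [r3 r4]]].
  destruct (crp_pos m2 (MM eps) s2) as [t1 [t2 [t3 t4]]].
  fold s1 s2 s3 in p1, p2, p3, p4, p5, r1, r2, r3, r4, t1, t2, t3, t4.
  assert (v23 : px2 s3 = 1 -> pv2 s3 = pv2 st).
  { intros h. rewrite t4 by lra. lra. }
  set (c := coll_right_wall s3) in *.
  replace (Qf eps m1 m2 c - Qf eps m1 m2 st) with
     ((Qf eps m1 m2 c - Qf eps m1 m2 s3) + (Qf eps m1 m2 s1 - Qf eps m1 m2 st)) by lra.
  assert (e4 : Rabs (Qf eps m1 m2 c - Qf eps m1 m2 s3) <= 2 * eps * m2 * Rabs (pv2 st)).
  { destruct (Req_dec (px2 s3) 1) as [h|h]. rewrite <- (v23 h); auto.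
    rewrite (w4' h). unfold Rminus; rewrite Rplus_opp_r, Rabs_R0.
    pose proof (Rabs_pos (pv2 st)). apply Rmult_le_pos; [|lra]. assert (0 < 2*eps*m2) by (apply Rmult_lt_0_compat; lra). lra. }
  split; [|split].
  - eapply Rle_trans; [apply Rabs_triang|]. lra.
  - intros h. rewrite (w1' h). unfold Rminus at 2; rewrite Rplus_opp_r, Rplus_0_r. auto.
  - intros h h'. rewrite w4' by lra. lra.
Qed.

Lemma A0 k x : k <= Rabs x -> x <= - k \/ k <= x.
Proof. unfold Rabs; destruct Rcase_abs; lra. Qed.
Lemma Ad x a : Rabs x < a -> - a < x < a.
Proof. unfold Rabs; destruct Rcase_abs; lra. Qed.

Lemma coll_out m1 m2 eps st k : 0 < m1 -> 0 < m2 -> 0 < eps -> 0 < pX st < 1 -> 0 < k ->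
  Rabs (pv1 (coll m1 m2 (MM eps) st)) >= k -> Rabs (pv2 (coll m1 m2 (MM eps) st)) >= k ->
  Rabs (pV st) + 2 * m1 * eps ^ 2 * (Rabs (pv1 st) + Rabs (pV st)) < k / 2 ->
  Rabs (pV (coll m1 m2 (MM eps) st)) < k / 2 ->
  (px1 st = 0 -> 0 < pv1 (coll m1 m2 (MM eps) st)) /\
  (px1 st = pX st -> pv1 (coll m1 m2 (MM eps) st) < pV (coll m1 m2 (MM eps) st)) /\
  (px2 st = pX st -> pV (coll m1 m2 (MM eps) st) < pv2 (coll m1 m2 (MM eps) st)) /\
  (px2 st = 1 -> pv2 (coll m1 m2 (MM eps) st) < 0).
Proof.
  intros hm1 hm2 he hX hk h3 h4 h5 h6.
  assert (hh := el_V_abs m1 eps (pv1 st) (pV st) hm1 he).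
  assert (hM : 0 < / eps ^ 2) by (apply Rinv_0_lt_compat; apply pow_lt; lra).
  assert (0 <= 2 * m1 * eps ^ 2 * (Rabs (pv1 st) + Rabs (pV st))).
  { pose proof (Rabs_pos (pv1 st)); pose proof (Rabs_pos (pV st)). assert (0 < eps^2) by (apply pow_lt; lra).
    apply Rmult_le_pos; [|lra]. apply Rmult_le_pos; lra. }
  assert (bV := Ad (pV st) (k/2) ltac:(lra)).
  assert (bV' := Ad (elast_V m1 (/ eps ^ 2) (pv1 st) (pV st)) (k/2) ltac:(lra)).
  assert (r1 := el_rel m1 (/ eps ^ 2) (pv1 st) (pV st) hm1 hM).
  assert (r2 := el_rel m2 (/ eps ^ 2) (pv2 st) (pV st) hm2 hM).
  assert (r3 := el_rel m2 (/ eps ^ 2) (pv2 st) (elast_V m1 (/ eps ^ 2) (pv1 st) (pV st)) hm2 hM).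
  apply Rge_le in h3; apply Rge_le in h4.
  revert h3 h4 h6. unfold MM. stages; intros h3 h4 h6; apply Ad in h6;
  repeat split; intros; try (exfalso; lra);
  try (destruct (A0 _ _ h3); lra); try (destruct (A0 _ _ h4); lra).
Qed.

Lemma phi1_half st : px1 st = pX st -> 0 < pX st -> phi1 st = 1/2.
Proof. intros h hX. unfold phi1; rewrite h; destruct Rle_dec; field; lra. Qed.
Lemma phi1_zero st : px1 st = 0 -> 0 < pX st -> phi1 st = 0 \/ phi1 st = 1.
Proof. intros h hX. unfold phi1; rewrite h; destruct Rle_dec; [left|right]; field; lra. Qed.
Lemma phi2_half st : px2 st = pX st -> pX st < 1 -> phi2 st = 1/2.
Proof. intros h hX. unfold phi2; rewrite h; destruct Rle_dec; field; lra. Qed.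
Lemma phi2_one st : px2 st = 1 -> pX st < 1 -> phi2 st = 0 \/ phi2 st = 1.
Proof. intros h hX. unfold phi2; rewrite h; destruct Rle_dec; [left|right]; field; lra. Qed.

Lemma phi1_coll m1 m2 eps st : 0 < pX st ->
  (exists n, phi1 (coll m1 m2 (MM eps) st) - phi1 st = IZR n) /\
  (px1 st <> 0 -> phi1 (coll m1 m2 (MM eps) st) = phi1 st).
Proof.
  intros hX. destruct (coll_pos m1 m2 (MM eps) st) as [e1 [e2 e3]].
  set (c := coll m1 m2 (MM eps) st) in *.
  destruct (Req_dec (px1 st) 0) as [h0|h0].
  - split; [|intros; contradiction].
    destruct (phi1_zero st h0 hX) as [p|p]; destruct (phi1_zero c ltac:(lra) ltac:(lra)) as [q|q];
      rewrite p, q; [exists 0%Z|exists 1%Z|exists (-1)%Z|exists 0%Z]; simpl; lra.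
  - destruct (Req_dec (px1 st) (pX st)) as [hx|hx].
    + rewrite (phi1_half st hx hX), (phi1_half c ltac:(lra) ltac:(lra)).
      split; auto. exists 0%Z; simpl; lra.
    + assert (phi1 c = phi1 st).
      { unfold phi1. unfold c; rewrite coll_v1_same by auto. fold c. rewrite e1, e2. auto. }
      split; auto. exists 0%Z; simpl; lra.
Qed.

Lemma phi2_coll m1 m2 eps st : pX st < 1 ->
  exists n, phi2 (coll m1 m2 (MM eps) st) - phi2 st = IZR n.
Proof.
  intros hX. destruct (coll_pos m1 m2 (MM eps) st) as [e1 [e2 e3]].
  set (c := coll m1 m2 (MM eps) st) in *.
  destruct (Req_dec (px2 st) 1) as [h0|h0].
  - destruct (phi2_one st h0 hX) as [p|p]; destruct (phi2_one c ltac:(lra) ltac:(lra)) as [q|q];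
      rewrite p, q; [exists 0%Z|exists 1%Z|exists (-1)%Z|exists 0%Z]; simpl; lra.
  - destruct (Req_dec (px2 st) (pX st)) as [hx|hx].
    + rewrite (phi2_half st hx hX), (phi2_half c ltac:(lra) ltac:(lra)). exists 0%Z; simpl; lra.
    + assert (phi2 c = phi2 st).
      { unfold phi2. unfold c; rewrite coll_v2_same by auto. fold c. rewrite e1, e3. auto. }
      exists 0%Z; simpl; lra.
Qed.

Lemma phi1_free tau c : 0 <= tau -> 0 < pX c -> 0 < pX c + tau * pV c -> 0 <= px1 c <= pX c ->
  Rabs (phi1 (free tau c) - phi1 c - tau * (Rabs (pv1 c) / (2 * (pX c + tau * pV c))))
    <= tau * (Rabs (pV c) / (2 * (pX c + tau * pV c))).
Proof.
  intros ht hX hXe hx. set (Xe := pX c + tau * pV c) in *.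
  assert (key : Rabs (px1 c * pV c / (pX c * Xe)) <= Rabs (pV c) / Xe).
  { rewrite Rabs_div by nra. rewrite Rabs_mult. rewrite (Rabs_right (pX c * Xe)) by nra.
    rewrite (Rabs_right (px1 c)) by lra.
    apply (Rmult_le_reg_r (pX c * Xe)); [nra|].
    unfold Rdiv. rewrite Rmult_assoc, Rinv_l by nra.
    replace (Rabs (pV c) * / Xe * (pX c * Xe)) with (Rabs (pV c) * pX c) by (field; lra).
    pose proof (Rabs_pos (pV c)). nra. }
  unfold phi1, free; cbn [pX pV px1 pv1 px2 pv2]. fold Xe.
  destruct (Rle_dec 0 (pv1 c)) as [p|p].
  - rewrite (Rabs_right (pv1 c)) by lra.
    replace ((px1 c + tau * pv1 c) / (2 * Xe) - px1 c / (2 * pX c) - tau * (pv1 c / (2 * Xe)))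
      with (- (tau / 2) * (px1 c * pV c / (pX c * Xe))) by (unfold Xe in *; field; lra).
    rewrite Rabs_mult, Rabs_Ropp, (Rabs_right (tau/2)) by lra.
    replace (tau * (Rabs (pV c) / (2 * Xe))) with (tau / 2 * (Rabs (pV c) / Xe)) by (field; lra).
    apply Rmult_le_compat_l; lra.
  - rewrite (Rabs_left (pv1 c)) by lra.
    replace (1 - (px1 c + tau * pv1 c) / (2 * Xe) - (1 - px1 c / (2 * pX c)) - tau * (- pv1 c / (2 * Xe)))
      with ((tau / 2) * (px1 c * pV c / (pX c * Xe))) by (unfold Xe in *; field; lra).
    rewrite Rabs_mult, (Rabs_right (tau/2)) by lra.
    replace (tau * (Rabs (pV c) / (2 * Xe))) with (tau / 2 * (Rabs (pV c) / Xe)) by (field; lra).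
    apply Rmult_le_compat_l; lra.
Qed.

Lemma phi2_free tau c : 0 <= tau -> pX c < 1 -> pX c + tau * pV c < 1 -> pX c <= px2 c <= 1 ->
  Rabs (phi2 (free tau c) - phi2 c - tau * (Rabs (pv2 c) / (2 * (1 - (pX c + tau * pV c)))))
    <= tau * (Rabs (pV c) / (2 * (1 - (pX c + tau * pV c)))).
Proof.
  intros ht hX hXe hx. set (Xe := pX c + tau * pV c) in *.
  set (Y := 1 - pX c). set (Ye := 1 - Xe). set (y := 1 - px2 c).
  assert (hY : 0 < Y) by (unfold Y; lra). assert (hYe : 0 < Ye) by (unfold Ye; lra).
  assert (hy : 0 <= y <= Y) by (unfold y, Y; lra).
  assert (key : Rabs (y * pV c / (Y * Ye)) <= Rabs (pV c) / Ye).
  { rewrite Rabs_div by nra. rewrite Rabs_mult. rewrite (Rabs_right (Y * Ye)) by nra.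
    rewrite (Rabs_right y) by lra.
    apply (Rmult_le_reg_r (Y * Ye)); [nra|].
    unfold Rdiv. rewrite Rmult_assoc, Rinv_l by nra.
    replace (Rabs (pV c) * / Ye * (Y * Ye)) with (Rabs (pV c) * Y) by (field; lra).
    pose proof (Rabs_pos (pV c)). nra. }
  unfold phi2, free; cbn [pX pV px1 pv1 px2 pv2]. fold Xe. fold Ye.
  destruct (Rle_dec (pv2 c) 0) as [p|p].
  - rewrite (Rabs_left1 (pv2 c)) by lra.
    replace ((1 - (px2 c + tau * pv2 c)) / (2 * Ye) - (1 - px2 c) / (2 * (1 - pX c)) -
       tau * (- pv2 c / (2 * Ye)))
      with ((tau / 2) * (y * pV c / (Y * Ye))) by (unfold y, Y, Ye, Xe in *; field; lra).
    rewrite Rabs_mult, (Rabs_right (tau/2)) by lra.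
    replace (tau * (Rabs (pV c) / (2 * Ye))) with (tau / 2 * (Rabs (pV c) / Ye)) by (field; lra).
    apply Rmult_le_compat_l; lra.
  - rewrite (Rabs_right (pv2 c)) by lra.
    replace (1 - (1 - (px2 c + tau * pv2 c)) / (2 * Ye) - (1 - (1 - px2 c) / (2 * (1 - pX c))) -
       tau * (pv2 c / (2 * Ye)))
      with (- (tau / 2) * (y * pV c / (Y * Ye))) by (unfold y, Y, Ye, Xe in *; field; lra).
    rewrite Rabs_mult, Rabs_Ropp, (Rabs_right (tau/2)) by lra.
    replace (tau * (Rabs (pV c) / (2 * Ye))) with (tau / 2 * (Rabs (pV c) / Ye)) by (field; lra).
    apply Rmult_le_compat_l; lra.
Qed.

Lemma coll_s1_same m1 m2 eps st : 0 < pX st -> px1 st <> pX st ->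
  Rabs (pv1 (coll m1 m2 (MM eps) st)) = Rabs (pv1 st).
Proof. intros hX h. unfold MM. stages; rewrite ?Rabs_Ropp; auto; lra. Qed.

Lemma coll_s2_same m1 m2 eps st : pX st < 1 -> px2 st <> pX st ->
  Rabs (pv2 (coll m1 m2 (MM eps) st)) = Rabs (pv2 st).
Proof. intros hX h. unfold MM. stages; rewrite ?Rabs_Ropp; auto; lra. Qed.



Definition Gd (aL Wm cmin cmax eps : R) (st : pstate) : Prop :=
  aL <= pX st <= 1 - aL /\ Rabs (pV st) <= eps * Wm /\
  cmin <= Rabs (pv1 st) <= cmax /\ cmin <= Rabs (pv2 st) <= cmax.

Record Env (m1 m2 aL Wm cmin cmax eps : R) (z : R -> pstate) (t1 : R) : Prop := {
  E_m1 : 0 < m1; E_m2 : 0 < m2; E_aL : 0 < aL; E_aL2 : aL < 1/2;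
  E_c : 0 < cmin; E_c2 : cmin <= cmax; E_W : 1 <= Wm; E_eps : 0 < eps; E_eps1 : eps <= 1;
  E_small : eps * Wm + 2 * m1 * eps ^ 2 * (cmax + eps * Wm) < cmin / 4;
  E_mot : is_motion m1 m2 (MM eps) z; E_t1 : 0 <= t1;
  E_G : forall u, 0 <= u <= t1 -> Gd aL Wm cmin cmax eps (z u);
  E_Gp : forall s, 0 <= s < t1 -> Gd aL Wm cmin cmax eps (coll m1 m2 (MM eps) (z s));
  E_adm : forall u, 0 <= u <= t1 -> admissible (z u);
  E_nz : forall s, 0 < s < t1 -> px1 (z s) <> 0 }.

Lemma mot_right m1 m2 M z s : is_motion m1 m2 M z -> 0 <= s ->
  exists d, 0 < d /\ forall u, s < u <= s + d -> z u = free (u - s) (coll m1 m2 M (z s)).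
Proof. intros [H _] hs. apply H; auto. Qed.

Lemma mot_left m1 m2 M z s : is_motion m1 m2 M z -> 0 < s ->
  exists d, 0 < d /\ forall u, s - d < u <= s -> 0 <= u -> z u = free (u - s) (z s).
Proof.
  intros [_ H] hs. destruct (H s hs) as [d [dp Hd]]. exists d; split; [auto|]. intros u Hu Hu0. apply Hd; auto.
Qed.

Lemma free_back a b c st : b = - a -> st = free a c -> c = free b st.
Proof.
  intros hb ->. destruct c. unfold free; cbn. subst b. f_equal; ring.
Qed.

Definition A1 st := Rabs (pv1 st) / (2 * pX st).
Definition B1 st := Rabs (pV st) / (2 * pX st).
Definition A2 st := Rabs (pv2 st) / (2 * (1 - pX st)).
Definition B2 st := Rabs (pV st) / (2 * (1 - pX st)).

Lemma free_pos tau c : pX (free tau c) = pX c + tau * pV c /\ px1 (free tau c) = px1 c + tau * pv1 c /\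
  px2 (free tau c) = px2 c + tau * pv2 c /\ pV (free tau c) = pV c /\ pv1 (free tau c) = pv1 c /\
  pv2 (free tau c) = pv2 c.
Proof. repeat split. Qed.

Lemma rate_right m1 m2 aL Wm cmin cmax eps z t1 s :
  Env m1 m2 aL Wm cmin cmax eps z t1 -> 0 <= s < t1 ->
  exists d, 0 < d /\ s + d <= t1 /\ forall u, s < u <= s + d ->
    z u = free (u - s) (coll m1 m2 (MM eps) (z s)) /\
    Rabs (phi1 (z u) - phi1 (coll m1 m2 (MM eps) (z s)) - (u - s) * A1 (z u)) <= (u - s) * B1 (z u) /\
    Rabs (phi2 (z u) - phi2 (coll m1 m2 (MM eps) (z s)) - (u - s) * A2 (z u)) <= (u - s) * B2 (z u).
Proof.
  intros E hs. pose proof (E_aL _ _ _ _ _ _ _ _ _ E). destruct (mot_right _ _ _ _ s (E_mot _ _ _ _ _ _ _ _ _ E) ltac:(lra)) as [d [dp Hd]].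
  exists (Rmin d (t1 - s)). assert (0 < Rmin d (t1 - s)) by (apply Rmin_pos; lra).
  assert (Rmin d (t1 - s) <= d) by apply Rmin_l. assert (Rmin d (t1 - s) <= t1 - s) by apply Rmin_r.
  split; [lra|split; [lra|]]. intros u Hu.
  assert (zu := Hd u ltac:(lra)).
  set (c := coll m1 m2 (MM eps) (z s)) in *.
  destruct (coll_pos m1 m2 (MM eps) (z s)) as [p1 [p2 p3]]. fold c in p1, p2, p3.
  destruct (E_G _ _ _ _ _ _ _ _ _ E u ltac:(lra)) as [gu _].
  destruct (E_G _ _ _ _ _ _ _ _ _ E s ltac:(lra)) as [gs _].
  destruct (E_adm _ _ _ _ _ _ _ _ _ E s ltac:(lra)) as [ad1 ad2].
  assert (eX : pX (z u) = pX c + (u - s) * pV c) by (rewrite zu; reflexivity).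
  split; auto. rewrite zu. unfold A1, B1, A2, B2. cbn [pX pV px1 pv1 px2 pv2 free].
  split.
  - apply phi1_free; lra.
  - apply phi2_free; lra.
Qed.

Lemma rate_left m1 m2 aL Wm cmin cmax eps z t1 s :
  Env m1 m2 aL Wm cmin cmax eps z t1 -> 0 < s <= t1 ->
  exists d, 0 < d /\ forall u, s - d < u < s -> 0 <= u /\
    Rabs (phi1 (z s) - phi1 (z u) - (s - u) * A1 (z s)) <= (s - u) * B1 (z s) /\
    Rabs (phi2 (z s) - phi2 (z u) - (s - u) * A2 (z s)) <= (s - u) * B2 (z s).
Proof.
  intros E hs. pose proof (E_aL _ _ _ _ _ _ _ _ _ E). destruct (mot_left _ _ _ _ s (E_mot _ _ _ _ _ _ _ _ _ E) ltac:(lra)) as [d [dp Hd]].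
  exists (Rmin d s). assert (0 < Rmin d s) by (apply Rmin_pos; lra).
  assert (Rmin d s <= d) by apply Rmin_l. assert (Rmin d s <= s) by apply Rmin_r.
  split; [lra|]. intros u Hu. split; [lra|].
  assert (zu := Hd u ltac:(lra) ltac:(lra)).
  assert (zs := free_back (u - s) (s - u) (z s) (z u) ltac:(ring) zu).
  destruct (E_G _ _ _ _ _ _ _ _ _ E u ltac:(lra)) as [gu _].
  destruct (E_G _ _ _ _ _ _ _ _ _ E s ltac:(lra)) as [gs _].
  destruct (E_adm _ _ _ _ _ _ _ _ _ E u ltac:(lra)) as [ad1 ad2].
  assert (eX : pX (z s) = pX (z u) + (s - u) * pV (z u)) by (rewrite zs; reflexivity).
  rewrite zs. unfold A1, B1, A2, B2. cbn [pX pV px1 pv1 px2 pv2 free].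
  split.
  - apply phi1_free; lra.
  - apply phi2_free; lra.
Qed.

Lemma comb tau x A B w L : 0 <= tau -> Rabs (x - tau * A) <= tau * B -> Rabs (A - w) + B <= L ->
  Rabs (x - w * tau) <= L * tau.
Proof.
  intros ht h1 h2. replace (x - w * tau) with ((x - tau * A) + tau * (A - w)) by ring.
  eapply Rle_trans; [apply Rabs_triang|]. rewrite Rabs_mult, (Rabs_right tau) by lra.
  pose proof (Rabs_pos (A - w)). nra.
Qed.

Lemma phi_ang (i : bool) m1 m2 aL Wm cmin cmax eps z t1 a b w L (Pk : R -> Prop) :
  Env m1 m2 aL Wm cmin cmax eps z t1 -> 0 <= a <= b -> b <= t1 ->
  Pk 0 -> (forall x y, Pk x -> Pk y -> Pk (x + y)) ->
  (forall s, a <= s < b -> Pk ((if i then phi1 else phi2) (coll m1 m2 (MM eps) (z s)) -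
                              (if i then phi1 else phi2) (z s))) ->
  (forall u, a <= u <= b -> Rabs ((if i then A1 else A2) (z u) - w) + (if i then B1 else B2) (z u) <= L) ->
  exists k, Pk k /\ Rabs ((if i then phi1 else phi2) (z b) - (if i then phi1 else phi2) (z a) - k - w * (b - a))
     <= L * (b - a).
Proof.
  intros E hab hb P0 Padd Hk HA.
  apply (ang a b w L (fun u => (if i then phi1 else phi2) (z u)) Pk P0 Padd ltac:(lra)).
  - intros s Hs. destruct (rate_right _ _ _ _ _ _ _ _ _ s E ltac:(lra)) as [d [dp [db Hd]]].
    exists (Rmin d (b - s)), ((if i then phi1 else phi2) (coll m1 m2 (MM eps) (z s)) - (if i then phi1 else phi2) (z s)).
    assert (0 < Rmin d (b - s)) by (apply Rmin_pos; lra).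
    assert (Rmin d (b - s) <= d) by apply Rmin_l. assert (Rmin d (b - s) <= b - s) by apply Rmin_r.
    split; auto. split; auto. intros u Hu. destruct (Hd u ltac:(lra)) as [_ [r1 r2]].
    assert (hA := HA u ltac:(lra)).
    replace (u - s) with (u - s) by ring.
    destruct i.
    + replace (phi1 (z u) - phi1 (z s) - (phi1 (coll m1 m2 (MM eps) (z s)) - phi1 (z s)) - w * (u - s))
        with (phi1 (z u) - phi1 (coll m1 m2 (MM eps) (z s)) - w * (u - s)) by ring.
      apply (comb _ _ (A1 (z u)) (B1 (z u))); auto; lra.
    + replace (phi2 (z u) - phi2 (z s) - (phi2 (coll m1 m2 (MM eps) (z s)) - phi2 (z s)) - w * (u - s))
        with (phi2 (z u) - phi2 (coll m1 m2 (MM eps) (z s)) - w * (u - s)) by ring.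
      apply (comb _ _ (A2 (z u)) (B2 (z u))); auto; lra.
  - intros s Hs. destruct (rate_left _ _ _ _ _ _ _ _ _ s E ltac:(lra)) as [d [dp Hd]].
    exists d; split; auto. intros u Hu. destruct (Hd u Hu) as [u0 [r1 r2]].
    assert (hA := HA s ltac:(lra)).
    destruct i.
    + apply (comb _ _ (A1 (z s)) (B1 (z s))); auto; lra.
    + apply (comb _ _ (A2 (z s)) (B2 (z s))); auto; lra.
Qed.

Definition lo0 cmin := cmin / 4.
Definition hi0 aL cmin cmax := (cmax + cmin) / (2 * aL).

Lemma crude_gen aL cmin cmax eps Wm X v V : 0 < aL -> aL <= X <= 1 -> 0 < cmin ->
  cmin <= Rabs v <= cmax -> Rabs V <= eps * Wm -> eps * Wm < cmin / 4 ->
  Rabs (Rabs v / (2 * X) - (lo0 cmin + hi0 aL cmin cmax) / 2) + Rabs V / (2 * X)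
    <= (hi0 aL cmin cmax - lo0 cmin) / 2.
Proof.
  intros ha hX hc hv hV hs. unfold lo0, hi0.
  set (A := Rabs v / (2 * X)). set (B := Rabs V / (2 * X)).
  pose proof (Rabs_pos V).
  assert (h1 : cmin / 4 <= A - B).
  { unfold A, B. replace (Rabs v / (2 * X) - Rabs V / (2 * X)) with ((Rabs v - Rabs V) / (2 * X)) by (field; lra).
    apply Rle_trans with ((Rabs v - Rabs V) / 2). lra.
    unfold Rdiv. apply Rmult_le_compat_l; [lra|]. apply Rinv_le_contravar; lra. }
  assert (h2 : A + B <= (cmax + cmin) / (2 * aL)).
  { unfold A, B. replace (Rabs v / (2 * X) + Rabs V / (2 * X)) with ((Rabs v + Rabs V) / (2 * X)) by (field; lra).
    apply Rle_trans with ((Rabs v + Rabs V) / (2 * aL)).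
    - unfold Rdiv. apply Rmult_le_compat_l; [lra|]. apply Rinv_le_contravar; lra.
    - unfold Rdiv. apply Rmult_le_compat_r; [left; apply Rinv_0_lt_compat; lra|lra]. }
  unfold Rabs at 1; destruct Rcase_abs; lra.
Qed.

Lemma E_small2 m1 m2 aL Wm cmin cmax eps z t1 : Env m1 m2 aL Wm cmin cmax eps z t1 ->
  eps * Wm < cmin / 4.
Proof.
  intros E. pose proof (E_small _ _ _ _ _ _ _ _ _ E). pose proof (E_m1 _ _ _ _ _ _ _ _ _ E).
  pose proof (E_eps _ _ _ _ _ _ _ _ _ E). pose proof (E_W _ _ _ _ _ _ _ _ _ E).
  pose proof (E_c _ _ _ _ _ _ _ _ _ E). pose proof (E_c2 _ _ _ _ _ _ _ _ _ E).
  assert (0 <= 2 * m1 * eps ^ 2 * (cmax + eps * Wm)).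
  { assert (0 < eps ^ 2) by (apply pow_lt; lra). apply Rmult_le_pos; [|nra]. nra. }
  lra.
Qed.

Lemma crude m1 m2 aL Wm cmin cmax eps z t1 u : Env m1 m2 aL Wm cmin cmax eps z t1 -> 0 <= u <= t1 ->
  Rabs (A1 (z u) - (lo0 cmin + hi0 aL cmin cmax) / 2) + B1 (z u) <= (hi0 aL cmin cmax - lo0 cmin) / 2 /\
  Rabs (A2 (z u) - (lo0 cmin + hi0 aL cmin cmax) / 2) + B2 (z u) <= (hi0 aL cmin cmax - lo0 cmin) / 2.
Proof.
  intros E hu. destruct (E_G _ _ _ _ _ _ _ _ _ E u hu) as [g1 [g2 [g3 g4]]].
  pose proof (E_small2 _ _ _ _ _ _ _ _ _ E). pose proof (E_aL _ _ _ _ _ _ _ _ _ E).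
  pose proof (E_aL2 _ _ _ _ _ _ _ _ _ E). pose proof (E_c _ _ _ _ _ _ _ _ _ E).
  unfold A1, B1, A2, B2. split; apply (crude_gen aL cmin cmax eps Wm); auto; lra.
Qed.

Lemma phi1_range st : admissible st -> 0 < pX st -> 0 <= phi1 st <= 1.
Proof.
  intros [[h1 h2] _] hX. unfold phi1.
  assert (0 <= px1 st / (2 * pX st) <= 1/2).
  { split. apply Rmult_le_pos; [lra|left; apply Rinv_0_lt_compat; lra].
    apply (Rmult_le_reg_r (2 * pX st)); [lra|]. unfold Rdiv. rewrite Rmult_assoc, Rinv_l by lra. lra. }
  destruct Rle_dec; lra.
Qed.

Lemma t1_bound m1 m2 aL Wm cmin cmax eps z t1 : Env m1 m2 aL Wm cmin cmax eps z t1 ->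
  t1 <= 8 / cmin.
Proof.
  intros E. pose proof (E_t1 _ _ _ _ _ _ _ _ _ E) as ht. pose proof (E_c _ _ _ _ _ _ _ _ _ E).
  destruct (Req_dec t1 0) as [e|ne].
  - rewrite e. apply Rmult_le_pos; [lra|left; apply Rinv_0_lt_compat; lra].
  - assert (tp : 0 < t1) by lra.
    destruct (phi_ang true _ _ _ _ _ _ _ _ _ (t1/4) (3*t1/4) ((lo0 cmin + hi0 aL cmin cmax) / 2)
       ((hi0 aL cmin cmax - lo0 cmin) / 2) (fun k => k = 0) E ltac:(lra) ltac:(lra) eq_refl)
      as [k [k0 Hk]].
    + intros x y -> ->; ring.
    + intros s Hs. simpl. destruct (E_G _ _ _ _ _ _ _ _ _ E s ltac:(lra)) as [g1 _].
      pose proof (E_aL _ _ _ _ _ _ _ _ _ E).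
      destruct (phi1_coll m1 m2 eps (z s) ltac:(lra)) as [_ h].
      rewrite h by (apply (E_nz _ _ _ _ _ _ _ _ _ E); lra). ring.
    + intros u Hu. apply (crude _ _ _ _ _ _ _ _ _ u E); lra.
    + simpl in Hk. subst k.
      destruct (E_G _ _ _ _ _ _ _ _ _ E (t1/4) ltac:(lra)) as [ga _].
      destruct (E_G _ _ _ _ _ _ _ _ _ E (3*t1/4) ltac:(lra)) as [gb _].
      pose proof (E_aL _ _ _ _ _ _ _ _ _ E).
      pose proof (phi1_range _ (E_adm _ _ _ _ _ _ _ _ _ E (t1/4) ltac:(lra)) ltac:(lra)).
      pose proof (phi1_range _ (E_adm _ _ _ _ _ _ _ _ _ E (3*t1/4) ltac:(lra)) ltac:(lra)).
      unfold lo0 in Hk. unfold Rabs in Hk; destruct Rcase_abs in Hk.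
      * apply (Rmult_le_reg_r (cmin / 8)). lra.
        replace (8 / cmin * (cmin / 8)) with 1 by (field; lra). lra.
      * apply (Rmult_le_reg_r (cmin / 8)). lra.
        replace (8 / cmin * (cmin / 8)) with 1 by (field; lra). lra.
Qed.

Definition IsInt (k : R) : Prop := exists n, k = IZR n.
Lemma IsInt0 : IsInt 0. Proof. exists 0%Z; reflexivity. Qed.
Lemma IsInt_add x y : IsInt x -> IsInt y -> IsInt (x + y).
Proof. intros [a ->] [b ->]. exists (a + b)%Z. rewrite plus_IZR; auto. Qed.

Lemma int_pos1 q : 0 < IZR q -> 1 <= IZR q.
Proof. intros h. apply lt_0_IZR in h. apply IZR_le. lia. Qed.

Lemma sep_gen (i : bool) m1 m2 aL Wm cmin cmax eps z t1 c c' :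
  Env m1 m2 aL Wm cmin cmax eps z t1 -> 0 <= c < c' -> c' <= t1 ->
  IsInt ((if i then phi1 else phi2) (z c') - (if i then phi1 else phi2) (z c)) ->
  c + / hi0 aL cmin cmax <= c'.
Proof.
  intros E hc hc' [n hn].
  pose proof (E_aL _ _ _ _ _ _ _ _ _ E). pose proof (E_c _ _ _ _ _ _ _ _ _ E).
  pose proof (E_aL2 _ _ _ _ _ _ _ _ _ E). pose proof (E_c2 _ _ _ _ _ _ _ _ _ E).
  destruct (phi_ang i _ _ _ _ _ _ _ _ _ c c' ((lo0 cmin + hi0 aL cmin cmax) / 2)
       ((hi0 aL cmin cmax - lo0 cmin) / 2) IsInt E ltac:(lra) ltac:(lra) IsInt0 IsInt_add)
      as [k [[m ->] Hk]].
  - intros s Hs. destruct (E_G _ _ _ _ _ _ _ _ _ E s ltac:(lra)) as [g1 _].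
    destruct i.
    + destruct (phi1_coll m1 m2 eps (z s) ltac:(lra)) as [h _]. exact h.
    + apply (phi2_coll m1 m2 eps (z s)). lra.
  - intros u Hu. destruct (crude _ _ _ _ _ _ _ _ _ u E ltac:(lra)); destruct i; auto.
  - rewrite hn in Hk. rewrite <- minus_IZR in Hk. set (q := (n - m)%Z) in *.
    assert (hh : 0 < hi0 aL cmin cmax).
    { unfold hi0. apply Rmult_lt_0_compat; [lra|apply Rinv_0_lt_compat; lra]. }
    assert (lp : 0 < lo0 cmin) by (unfold lo0; lra).
    assert (lh : lo0 cmin <= hi0 aL cmin cmax).
    { unfold lo0, hi0. apply Rle_trans with ((cmax + cmin) / 2). lra.
      unfold Rdiv. apply Rmult_le_compat_l; [lra|]. apply Rinv_le_contravar; lra. }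
    assert (q1 : lo0 cmin * (c' - c) <= IZR q <= hi0 aL cmin cmax * (c' - c)).
    { unfold Rabs in Hk; destruct Rcase_abs in Hk; split; nra. }
    assert (q2 : 1 <= IZR q) by (apply int_pos1; nra).
    assert (1 <= hi0 aL cmin cmax * (c' - c)) by lra.
    assert (/ hi0 aL cmin cmax <= c' - c); [|lra].
    apply (Rmult_le_reg_l (hi0 aL cmin cmax)); auto. rewrite Rinv_r by lra. lra.
Qed.

Ltac envfacts E :=
  pose proof (E_m1 _ _ _ _ _ _ _ _ _ E); pose proof (E_m2 _ _ _ _ _ _ _ _ _ E);
  pose proof (E_aL _ _ _ _ _ _ _ _ _ E); pose proof (E_aL2 _ _ _ _ _ _ _ _ _ E);
  pose proof (E_c _ _ _ _ _ _ _ _ _ E); pose proof (E_c2 _ _ _ _ _ _ _ _ _ E);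
  pose proof (E_W _ _ _ _ _ _ _ _ _ E); pose proof (E_eps _ _ _ _ _ _ _ _ _ E);
  pose proof (E_eps1 _ _ _ _ _ _ _ _ _ E); pose proof (E_small2 _ _ _ _ _ _ _ _ _ E);
  pose proof (E_t1 _ _ _ _ _ _ _ _ _ E).

Lemma right_step m1 m2 aL Wm cmin cmax eps z t1 t s : Env m1 m2 aL Wm cmin cmax eps z t1 ->
  t <= t1 -> 0 <= s < t -> exists d, 0 < d /\ s + d <= t /\
  forall u, s < u <= s + d -> z u = free (u - s) (coll m1 m2 (MM eps) (z s)).
Proof.
  intros E ht hs. destruct (mot_right _ _ _ _ s (E_mot _ _ _ _ _ _ _ _ _ E) ltac:(lra)) as [d [dp Hd]].
  exists (Rmin d (t - s)). assert (0 < Rmin d (t - s)) by (apply Rmin_pos; lra).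
  assert (Rmin d (t - s) <= d) by apply Rmin_l. assert (Rmin d (t - s) <= t - s) by apply Rmin_r.
  split; [lra|split; [lra|]]. intros u Hu. apply Hd. lra.
Qed.

Lemma left_step m1 m2 aL Wm cmin cmax eps z t1 s : Env m1 m2 aL Wm cmin cmax eps z t1 ->
  0 < s -> exists d, 0 < d /\ forall u, s - d < u < s -> 0 <= u /\ z u = free (u - s) (z s).
Proof.
  intros E hs. destruct (mot_left _ _ _ _ s (E_mot _ _ _ _ _ _ _ _ _ E) ltac:(lra)) as [d [dp Hd]].
  exists (Rmin d s). assert (0 < Rmin d s) by (apply Rmin_pos; lra).
  assert (Rmin d s <= d) by apply Rmin_l. assert (Rmin d s <= s) by apply Rmin_r.
  split; [lra|]. intros u Hu. split; [lra|]. apply Hd; lra.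
Qed.

Lemma X_bound m1 m2 aL Wm cmin cmax eps z t1 t : Env m1 m2 aL Wm cmin cmax eps z t1 -> 0 <= t <= t1 ->
  Rabs (pX (z t) - pX (z 0)) <= eps * Wm * t.
Proof.
  intros E ht. envfacts E.
  assert (HL := lip_jump 0 t (eps * Wm) 0 0 1 (fun u => pX (z u)) (fun _ => False)
    ltac:(lra) ltac:(nra) ltac:(lra) ltac:(lra) ltac:(lra) ltac:(tauto)).
  rewrite Rmult_0_l, !Rplus_0_r, Rminus_0_r in HL. apply HL; clear HL.
  - intros s Hs. destruct (right_step _ _ _ _ _ _ _ _ _ t s E ltac:(lra) Hs) as [d [dp [db Hd]]].
    exists d, 0. split; auto. split; [lra|]. split; [auto|]. intros u Hu. rewrite (Hd u Hu).
    destruct (coll_pos m1 m2 (MM eps) (z s)) as [p1 _].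
    destruct (E_Gp _ _ _ _ _ _ _ _ _ E s ltac:(lra)) as [_ [gv _]].
    cbn [free pX]. rewrite p1. replace (pX (z s) + (u - s) * pV (coll m1 m2 (MM eps) (z s)) - pX (z s))
      with ((u - s) * pV (coll m1 m2 (MM eps) (z s))) by ring.
    rewrite Rabs_mult, (Rabs_right (u - s)) by lra. nra.
  - intros s Hs. destruct (left_step _ _ _ _ _ _ _ _ _ s E ltac:(lra)) as [d [dp Hd]].
    exists d; split; auto. intros u Hu. destruct (Hd u Hu) as [u0 zu]. rewrite zu.
    destruct (E_G _ _ _ _ _ _ _ _ _ E s ltac:(lra)) as [_ [gv _]].
    cbn [free pX]. replace (pX (z s) - (pX (z s) + (u - s) * pV (z s))) with ((s - u) * pV (z s)) by ring.
    rewrite Rabs_mult, (Rabs_right (s - u)) by lra. nra.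
Qed.

Lemma s1_bound m1 m2 aL Wm cmin cmax eps z t1 t : Env m1 m2 aL Wm cmin cmax eps z t1 -> 0 <= t <= t1 ->
  let J := 2 * m1 * eps ^ 2 * cmax + 2 * (eps * Wm) in
  Rabs (Rabs (pv1 (z t)) - Rabs (pv1 (z 0))) <= J + J + J * (1 + t / / hi0 aL cmin cmax).
Proof.
  intros E ht J. envfacts E.
  assert (hh : 0 < hi0 aL cmin cmax).
  { unfold hi0. apply Rmult_lt_0_compat; [lra|apply Rinv_0_lt_compat; lra]. }
  assert (e2 : 0 < eps ^ 2) by (apply pow_lt; lra).
  assert (Jp : 0 <= J) by (unfold J; assert (0 <= m1 * eps^2 * cmax) by (apply Rmult_le_pos; nra); nra).
  assert (HL := lip_jump 0 t 0 J J (/ hi0 aL cmin cmax) (fun u => Rabs (pv1 (z u)))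
    (fun s => px1 (z s) = pX (z s)) ltac:(lra) ltac:(lra) Jp Jp ltac:(apply Rinv_0_lt_compat; lra)).
  rewrite Rmult_0_l, Rplus_0_l, Rminus_0_r in HL. apply HL; clear HL.
  - intros c c' h1 h2 h3 j1 j2. apply (sep_gen true _ _ _ _ _ _ _ _ _ c c' E); try lra.
    simpl. destruct (E_G _ _ _ _ _ _ _ _ _ E c ltac:(lra)) as [g1 _].
    destruct (E_G _ _ _ _ _ _ _ _ _ E c' ltac:(lra)) as [g2 _].
    rewrite (phi1_half _ j1), (phi1_half _ j2) by lra. exists 0%Z. simpl; ring.
  - intros s Hs. destruct (right_step _ _ _ _ _ _ _ _ _ t s E ltac:(lra) Hs) as [d [dp [db Hd]]].
    destruct (E_G _ _ _ _ _ _ _ _ _ E s ltac:(lra)) as [g1 [g2 [g3 g4]]].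
    set (c := coll m1 m2 (MM eps) (z s)) in *.
    exists d, (Rabs (Rabs (pv1 c) - Rabs (pv1 (z s)))). split; auto. split; [apply Rabs_pos|].
    split.
    + destruct (Req_dec (px1 (z s)) (pX (z s))) as [e|e].
      * assert (jb : Rabs (Rabs (pv1 c) - Rabs (pv1 (z s))) <= J).
        { unfold c. eapply Rle_trans; [apply coll_s1; lra|]. unfold J.
          assert (m1 * eps^2 * Rabs (pv1 (z s)) <= m1 * eps ^2 * cmax) by
            (apply Rmult_le_compat_l; [nra|lra]). lra. }
        destruct (Req_dec s 0) as [s0|s0]; [right; left; split; auto|right; right; split; [lra|split; auto]].
      * left. unfold c. rewrite coll_s1_same by lra. unfold Rminus; rewrite Rplus_opp_r. apply Rabs_R0.
    + intros u Hu. rewrite (Hd u Hu). cbn [free pv1]. lra.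
  - intros s Hs. destruct (left_step _ _ _ _ _ _ _ _ _ s E ltac:(lra)) as [d [dp Hd]].
    exists d; split; auto. intros u Hu. destruct (Hd u Hu) as [u0 zu]. rewrite zu. cbn [free pv1].
    unfold Rminus; rewrite Rplus_opp_r, Rabs_R0. lra.
Qed.

Lemma s2_bound m1 m2 aL Wm cmin cmax eps z t1 t : Env m1 m2 aL Wm cmin cmax eps z t1 -> 0 <= t <= t1 ->
  let J := 2 * m2 * eps ^ 2 * cmax + 2 * (eps * Wm + 2 * m1 * eps ^ 2 * (cmax + eps * Wm)) in
  Rabs (Rabs (pv2 (z t)) - Rabs (pv2 (z 0))) <= J + J + J * (1 + t / / hi0 aL cmin cmax).
Proof.
  intros E ht J. envfacts E.
  assert (hh : 0 < hi0 aL cmin cmax).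
  { unfold hi0. apply Rmult_lt_0_compat; [lra|apply Rinv_0_lt_compat; lra]. }
  assert (e2 : 0 < eps ^ 2) by (apply pow_lt; lra).
  assert (Jp : 0 <= J).
  { unfold J. assert (0 <= m2 * eps^2 * cmax) by (apply Rmult_le_pos; nra).
    assert (0 <= m1 * eps^2 * (cmax + eps * Wm)) by (apply Rmult_le_pos; nra). nra. }
  assert (HL := lip_jump 0 t 0 J J (/ hi0 aL cmin cmax) (fun u => Rabs (pv2 (z u)))
    (fun s => px2 (z s) = pX (z s)) ltac:(lra) ltac:(lra) Jp Jp ltac:(apply Rinv_0_lt_compat; lra)).
  rewrite Rmult_0_l, Rplus_0_l, Rminus_0_r in HL. apply HL; clear HL.
  - intros c c' h1 h2 h3 j1 j2. apply (sep_gen false _ _ _ _ _ _ _ _ _ c c' E); try lra.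
    simpl. destruct (E_G _ _ _ _ _ _ _ _ _ E c ltac:(lra)) as [g1 _].
    destruct (E_G _ _ _ _ _ _ _ _ _ E c' ltac:(lra)) as [g2 _].
    rewrite (phi2_half _ j1), (phi2_half _ j2) by lra. exists 0%Z. simpl; ring.
  - intros s Hs. destruct (right_step _ _ _ _ _ _ _ _ _ t s E ltac:(lra) Hs) as [d [dp [db Hd]]].
    destruct (E_G _ _ _ _ _ _ _ _ _ E s ltac:(lra)) as [g1 [g2 [g3 g4]]].
    set (c := coll m1 m2 (MM eps) (z s)) in *.
    exists d, (Rabs (Rabs (pv2 c) - Rabs (pv2 (z s)))). split; auto. split; [apply Rabs_pos|].
    split.
    + destruct (Req_dec (px2 (z s)) (pX (z s))) as [e|e].
      * assert (jb : Rabs (Rabs (pv2 c) - Rabs (pv2 (z s))) <= J).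
        { unfold c. eapply Rle_trans; [apply coll_s2; lra|]. unfold J.
          assert (m2 * eps^2 * Rabs (pv2 (z s)) <= m2 * eps ^2 * cmax) by
            (apply Rmult_le_compat_l; [nra|lra]).
          assert (m1 * eps^2 * (Rabs (pv1 (z s)) + Rabs (pV (z s))) <= m1 * eps ^2 * (cmax + eps * Wm)) by
            (apply Rmult_le_compat_l; [nra|lra]). lra. }
        destruct (Req_dec s 0) as [s0|s0]; [right; left; split; auto|right; right; split; [lra|split; auto]].
      * left. unfold c. rewrite coll_s2_same by lra. unfold Rminus; rewrite Rplus_opp_r. apply Rabs_R0.
    + intros u Hu. rewrite (Hd u Hu). cbn [free pv2]. lra.
  - intros s Hs. destruct (left_step _ _ _ _ _ _ _ _ _ s E ltac:(lra)) as [d [dp Hd]].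
    exists d; split; auto. intros u Hu. destruct (Hd u Hu) as [u0 zu]. rewrite zu. cbn [free pv2].
    unfold Rminus; rewrite Rplus_opp_r, Rabs_R0. lra.
Qed.

Lemma Q_bound m1 m2 aL Wm cmin cmax eps z t1 t : Env m1 m2 aL Wm cmin cmax eps z t1 -> 0 <= t <= t1 ->
  let J0 := 2 * eps * m1 * cmax + 2 * eps * m2 * cmax in
  let J := 2 * eps * m2 * cmax in
  Rabs (Qf eps m1 m2 (z t) - Qf eps m1 m2 (z 0)) <= J0 + J + J * (1 + t / / hi0 aL cmin cmax).
Proof.
  intros E ht J0 J. envfacts E.
  assert (hh : 0 < hi0 aL cmin cmax).
  { unfold hi0. apply Rmult_lt_0_compat; [lra|apply Rinv_0_lt_compat; lra]. }
  assert (0 <= eps*m1*cmax) by (apply Rmult_le_pos; nra).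
  assert (0 <= eps*m2*cmax) by (apply Rmult_le_pos; nra).
  assert (Jp : 0 <= J) by (unfold J; lra).
  assert (J0p : 0 <= J0) by (unfold J0; lra).
  assert (HL := lip_jump 0 t 0 J0 J (/ hi0 aL cmin cmax) (fun u => Qf eps m1 m2 (z u))
    (fun s => px2 (z s) = 1) ltac:(lra) ltac:(lra) J0p Jp ltac:(apply Rinv_0_lt_compat; lra)).
  rewrite Rmult_0_l, Rplus_0_l, Rminus_0_r in HL. apply HL; clear HL.
  - intros c c' h1 h2 h3 j1 j2. apply (sep_gen false _ _ _ _ _ _ _ _ _ c c' E); try lra.
    simpl. destruct (E_G _ _ _ _ _ _ _ _ _ E c ltac:(lra)) as [g1 _].
    destruct (E_G _ _ _ _ _ _ _ _ _ E c' ltac:(lra)) as [g2 _].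
    destruct (phi2_one _ j1 ltac:(lra)) as [p|p]; destruct (phi2_one _ j2 ltac:(lra)) as [q|q];
      rewrite p, q; [exists 0%Z|exists 1%Z|exists (-1)%Z|exists 0%Z]; simpl; ring.
  - intros s Hs. destruct (right_step _ _ _ _ _ _ _ _ _ t s E ltac:(lra) Hs) as [d [dp [db Hd]]].
    destruct (E_G _ _ _ _ _ _ _ _ _ E s ltac:(lra)) as [g1 [g2 [g3 g4]]].
    destruct (coll_Q m1 m2 eps (z s) ltac:(lra) ltac:(lra) ltac:(lra) ltac:(lra)) as [qa [qb qc]].
    set (c := coll m1 m2 (MM eps) (z s)) in *.
    exists d, (Rabs (Qf eps m1 m2 c - Qf eps m1 m2 (z s))). split; auto. split; [apply Rabs_pos|].
    assert (em1 : 0 < eps * m1) by nra. assert (em2 : 0 < eps * m2) by nra.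
    split.
    + destruct (Req_dec s 0) as [s0|s0].
      * right; left; split; auto. unfold J0.
        assert (2 * eps * m1 * Rabs (pv1 (z s)) <= 2 * eps * m1 * cmax) by
          (apply Rmult_le_compat_l; [nra|lra]).
        assert (2 * eps * m2 * Rabs (pv2 (z s)) <= 2 * eps * m2 * cmax) by
          (apply Rmult_le_compat_l; [nra|lra]). lra.
      * assert (nz : px1 (z s) <> 0) by (apply (E_nz _ _ _ _ _ _ _ _ _ E); lra).
        destruct (Req_dec (px2 (z s)) 1) as [e|e].
        -- right; right; split; [lra|split; auto]. unfold J.
           assert (2 * eps * m2 * Rabs (pv2 (z s)) <= 2 * eps * m2 * cmax) by
             (apply Rmult_le_compat_l; [nra|lra]). specialize (qb nz). lra.
        -- left. rewrite (qc nz e). unfold Rminus; rewrite Rplus_opp_r. apply Rabs_R0.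
    + intros u Hu. rewrite (Hd u Hu). unfold Qf. cbn [free pv1 pv2 pV]. fold (Qf eps m1 m2 c). lra.
  - intros s Hs. destruct (left_step _ _ _ _ _ _ _ _ _ s E ltac:(lra)) as [d [dp Hd]].
    exists d; split; auto. intros u Hu. destruct (Hd u Hu) as [u0 zu]. rewrite zu. unfold Qf. cbn [free pv1 pv2 pV].
    unfold Rminus; rewrite Rplus_opp_r, Rabs_R0. lra.
Qed.

Lemma frac_diff aL cmax a a0 x x0 : 0 < aL -> aL <= x -> aL <= x0 <= 1 -> 0 <= a0 <= cmax ->
  Rabs (a / (2 * x) - a0 / (2 * x0)) <= (Rabs (a - a0) + cmax * Rabs (x - x0)) / (2 * aL ^ 2).
Proof.
  intros ha hx hx0 ha0.
  replace (a / (2 * x) - a0 / (2 * x0)) with (((a - a0) * x0 + a0 * (x0 - x)) / (2 * x * x0)) by (field; lra).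
  rewrite Rabs_div by nra. rewrite (Rabs_right (2 * x * x0)) by nra.
  assert (num : Rabs ((a - a0) * x0 + a0 * (x0 - x)) <= Rabs (a - a0) + cmax * Rabs (x - x0)).
  { eapply Rle_trans; [apply Rabs_triang|]. rewrite !Rabs_mult. rewrite (Rabs_right x0) by lra.
    rewrite (Rabs_right a0) by lra. rewrite <- (Rabs_Ropp (x0 - x)). replace (- (x0 - x)) with (x - x0) by ring.
    pose proof (Rabs_pos (a - a0)); pose proof (Rabs_pos (x - x0)). nra. }
  apply Rle_trans with ((Rabs (a - a0) + cmax * Rabs (x - x0)) / (2 * x * x0)).
  - unfold Rdiv. apply Rmult_le_compat_r; [left; apply Rinv_0_lt_compat; nra|auto].
  - unfold Rdiv. apply Rmult_le_compat_l. pose proof (Rabs_pos (a - a0)); pose proof (Rabs_pos (x - x0)).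
    assert (0 <= cmax) by lra. nra.
    apply Rinv_le_contravar; nra.
Qed.

Lemma dcirc_int a b n : dcirc a b <= Rabs (a - b - IZR n).
Proof.
  unfold dcirc. set (x := a - b). pose proof (base_fp x) as [f1 f2].
  pose proof (Rplus_Int_part_frac_part x) as ex.
  set (f := frac_part x) in *. set (m := Int_part x) in *.
  replace (x - IZR n) with (f + IZR (m - n)) by (rewrite minus_IZR; lra).
  destruct (Z.lt_ge_cases (m - n) 0) as [h|h].
  - assert (IZR (m - n) <= -1) by (apply IZR_le; lia).
    rewrite Rabs_left by lra. apply Rle_trans with (1 - f). apply Rmin_r. lra.
  - assert (0 <= IZR (m - n)) by (apply IZR_le; lia).
    rewrite Rabs_right by lra. apply Rle_trans with f. apply Rmin_l. lra.
Qed.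

Definition Tb cmin := 8 / cmin.
Definition Nn aL cmin cmax := 3 + Tb cmin * hi0 aL cmin cmax.
Definition K1 m1 aL Wm cmin cmax := (2 * m1 * cmax + 2 * Wm) * Nn aL cmin cmax.
Definition K2 m1 m2 aL Wm cmin cmax := (2 * m2 * cmax + 2 * (Wm + 2 * m1 * (cmax + Wm))) * Nn aL cmin cmax.
Definition KQ m1 m2 aL cmin cmax := 2 * m1 * cmax + 2 * m2 * cmax + 2 * m2 * cmax * Nn aL cmin cmax.
Definition KW m1 m2 aL cmin cmax := KQ m1 m2 aL cmin cmax + 2 * m1 * cmax + 2 * m2 * cmax.
Definition KX Wm cmin := Wm * Tb cmin.
Definition Lp m1 m2 aL Wm cmin cmax :=
  (K1 m1 aL Wm cmin cmax + K2 m1 m2 aL Wm cmin cmax + cmax * KX Wm cmin) / (2 * aL ^ 2) + Wm / (2 * aL).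
Definition Kp m1 m2 aL Wm cmin cmax := Lp m1 m2 aL Wm cmin cmax * Tb cmin.
Definition CstK m1 m2 aL Wm cmin cmax :=
  K1 m1 aL Wm cmin cmax + K2 m1 m2 aL Wm cmin cmax + KW m1 m2 aL cmin cmax + KX Wm cmin +
  Kp m1 m2 aL Wm cmin cmax + 1.

Lemma t_hi m1 m2 aL Wm cmin cmax eps z t1 t : Env m1 m2 aL Wm cmin cmax eps z t1 -> 0 <= t <= t1 ->
  0 < hi0 aL cmin cmax /\ 0 <= t / / hi0 aL cmin cmax <= Tb cmin * hi0 aL cmin cmax /\ t <= Tb cmin.
Proof.
  intros E ht. envfacts E. assert (hh : 0 < hi0 aL cmin cmax).
  { unfold hi0. apply Rmult_lt_0_compat; [lra|apply Rinv_0_lt_compat; lra]. }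
  pose proof (t1_bound _ _ _ _ _ _ _ _ _ E). unfold Tb.
  replace (t / / hi0 aL cmin cmax) with (t * hi0 aL cmin cmax) by (unfold Rdiv; rewrite Rinv_inv; auto).
  set (T8 := 8 / cmin) in *. split; auto. split; [split|]; nra.
Qed.

Lemma eps2_le eps : 0 < eps -> eps <= 1 -> eps ^ 2 <= eps.
Proof. intros. simpl. nra. Qed.

Lemma s1_eps m1 m2 aL Wm cmin cmax eps z t1 t : Env m1 m2 aL Wm cmin cmax eps z t1 -> 0 <= t <= t1 ->
  Rabs (Rabs (pv1 (z t)) - Rabs (pv1 (z 0))) <= eps * K1 m1 aL Wm cmin cmax.
Proof.
  intros E ht. envfacts E. destruct (t_hi _ _ _ _ _ _ _ _ _ t E ht) as [hh [th tb]].
  eapply Rle_trans; [apply (s1_bound _ _ _ _ _ _ _ _ _ t E ht)|]. cbv zeta.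
  pose proof (eps2_le eps ltac:(lra) ltac:(lra)).
  set (J := 2 * m1 * eps ^ 2 * cmax + 2 * (eps * Wm)).
  assert (hJ : 0 <= J <= eps * (2 * m1 * cmax + 2 * Wm)).
  { unfold J. assert (0 <= eps ^ 2) by (apply pow_le; lra).
    assert (m1 * eps ^ 2 * cmax <= m1 * eps * cmax).
    { apply Rmult_le_compat_r; [lra|]. apply Rmult_le_compat_l; lra. }
    assert (0 <= m1 * eps ^ 2 * cmax) by (apply Rmult_le_pos; [apply Rmult_le_pos|]; lra). nra. }
  unfold K1, Nn. nra.
Qed.

Lemma s2_eps m1 m2 aL Wm cmin cmax eps z t1 t : Env m1 m2 aL Wm cmin cmax eps z t1 -> 0 <= t <= t1 ->
  Rabs (Rabs (pv2 (z t)) - Rabs (pv2 (z 0))) <= eps * K2 m1 m2 aL Wm cmin cmax.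
Proof.
  intros E ht. envfacts E. destruct (t_hi _ _ _ _ _ _ _ _ _ t E ht) as [hh [th tb]].
  eapply Rle_trans; [apply (s2_bound _ _ _ _ _ _ _ _ _ t E ht)|]. cbv zeta.
  pose proof (eps2_le eps ltac:(lra) ltac:(lra)).
  set (J := 2 * m2 * eps ^ 2 * cmax + 2 * (eps * Wm + 2 * m1 * eps ^ 2 * (cmax + eps * Wm))).
  assert (hJ : 0 <= J <= eps * (2 * m2 * cmax + 2 * (Wm + 2 * m1 * (cmax + Wm)))).
  { unfold J. assert (0 <= eps ^ 2) by (apply pow_le; lra).
    assert (m2 * eps ^ 2 * cmax <= m2 * eps * cmax).
    { apply Rmult_le_compat_r; [lra|]. apply Rmult_le_compat_l; lra. }
    assert (0 <= m2 * eps ^ 2 * cmax) by (apply Rmult_le_pos; [apply Rmult_le_pos|]; lra).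
    assert (eps * Wm <= Wm) by nra.
    assert (m1 * eps ^ 2 * (cmax + eps * Wm) <= m1 * eps * (cmax + Wm)).
    { apply Rmult_le_compat; try nra. }
    assert (0 <= m1 * eps ^ 2 * (cmax + eps * Wm)) by (apply Rmult_le_pos; [apply Rmult_le_pos|]; nra). nra. }
  unfold K2, Nn. nra.
Qed.

Lemma X_eps m1 m2 aL Wm cmin cmax eps z t1 t : Env m1 m2 aL Wm cmin cmax eps z t1 -> 0 <= t <= t1 ->
  Rabs (pX (z t) - pX (z 0)) <= eps * KX Wm cmin.
Proof.
  intros E ht. envfacts E. destruct (t_hi _ _ _ _ _ _ _ _ _ t E ht) as [hh [th tb]].
  eapply Rle_trans; [apply (X_bound _ _ _ _ _ _ _ _ _ t E ht)|]. unfold KX. rewrite <- Rmult_assoc. apply Rmult_le_compat_l; [nra|lra].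
Qed.

Lemma W_eps m1 m2 aL Wm cmin cmax eps z t1 t : Env m1 m2 aL Wm cmin cmax eps z t1 -> 0 <= t <= t1 ->
  Rabs (pV (z t) / eps - pV (z 0) / eps) <= eps * KW m1 m2 aL cmin cmax.
Proof.
  intros E ht. envfacts E. destruct (t_hi _ _ _ _ _ _ _ _ _ t E ht) as [hh [th tb]].
  assert (HQ := Q_bound _ _ _ _ _ _ _ _ _ t E ht). cbv zeta in HQ. unfold Qf in HQ.
  destruct (E_G _ _ _ _ _ _ _ _ _ E t ht) as [_ [_ [a1 a2]]].
  destruct (E_G _ _ _ _ _ _ _ _ _ E 0 ltac:(lra)) as [_ [_ [b1 b2]]].
  set (Q0 := pV (z 0) / eps + eps * (m1 * pv1 (z 0) + m2 * pv2 (z 0))) in *.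
  set (Qt := pV (z t) / eps + eps * (m1 * pv1 (z t) + m2 * pv2 (z t))) in *.
  replace (pV (z t) / eps - pV (z 0) / eps) with
    ((Qt - Q0) - eps * m1 * (pv1 (z t) - pv1 (z 0)) - eps * m2 * (pv2 (z t) - pv2 (z 0)))
    by (unfold Qt, Q0; ring).
  assert (v1 : Rabs (pv1 (z t) - pv1 (z 0)) <= 2 * cmax).
  { unfold Rminus. eapply Rle_trans; [apply Rabs_triang|]. rewrite Rabs_Ropp. lra. }
  assert (v2 : Rabs (pv2 (z t) - pv2 (z 0)) <= 2 * cmax).
  { unfold Rminus. eapply Rle_trans; [apply Rabs_triang|]. rewrite Rabs_Ropp. lra. }
  assert (t1' : Rabs (eps * m1 * (pv1 (z t) - pv1 (z 0))) <= eps * (2 * m1 * cmax)).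
  { rewrite Rabs_mult, (Rabs_right (eps * m1)) by nra. assert (0 < eps * m1) by nra. nra. }
  assert (t2' : Rabs (eps * m2 * (pv2 (z t) - pv2 (z 0))) <= eps * (2 * m2 * cmax)).
  { rewrite Rabs_mult, (Rabs_right (eps * m2)) by nra. assert (0 < eps * m2) by nra. nra. }
  assert (hq : Rabs (Qt - Q0) <= eps * KQ m1 m2 aL cmin cmax).
  { eapply Rle_trans; [apply HQ|]. unfold KQ, Nn.
    assert (0 <= eps * m2 * cmax) by (apply Rmult_le_pos; nra). nra. }
  unfold KW. unfold Rminus at 1 2.
  eapply Rle_trans; [apply Rabs_triang|]. rewrite Rabs_Ropp.
  eapply Rle_trans; [apply Rplus_le_compat_r; apply Rabs_triang|]. rewrite Rabs_Ropp. lra.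
Qed.

Lemma Lp_bound (i : bool) m1 m2 aL Wm cmin cmax eps z t1 u : Env m1 m2 aL Wm cmin cmax eps z t1 -> 0 <= u <= t1 ->
  Rabs ((if i then A1 else A2) (z u) - (if i then A1 else A2) (z 0)) + (if i then B1 else B2) (z u)
    <= eps * Lp m1 m2 aL Wm cmin cmax.
Proof.
  intros E hu. envfacts E.
  destruct (E_G _ _ _ _ _ _ _ _ _ E u hu) as [gx [gv [g1 g2]]].
  destruct (E_G _ _ _ _ _ _ _ _ _ E 0 ltac:(lra)) as [hx [hv [h1 h2]]].
  assert (S1 := s1_eps _ _ _ _ _ _ _ _ _ u E hu).
  assert (S2 := s2_eps _ _ _ _ _ _ _ _ _ u E hu).
  assert (SX := X_eps _ _ _ _ _ _ _ _ _ u E hu).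
  assert (k1 : 0 <= K1 m1 aL Wm cmin cmax).
  { pose proof (Rabs_pos (Rabs (pv1 (z u)) - Rabs (pv1 (z 0)))). 
    destruct (Rle_dec 0 (K1 m1 aL Wm cmin cmax)); auto. nra. }
  assert (k2 : 0 <= K2 m1 m2 aL Wm cmin cmax).
  { pose proof (Rabs_pos (Rabs (pv2 (z u)) - Rabs (pv2 (z 0)))).
    destruct (Rle_dec 0 (K2 m1 m2 aL Wm cmin cmax)); auto. nra. }
  assert (aL2 : 0 < 2 * aL ^ 2) by (simpl; nra).
  assert (bB : Rabs (pV (z u)) / (2 * (if i then pX (z u) else 1 - pX (z u))) <= eps * (Wm / (2 * aL))).
  { replace (eps * (Wm / (2 * aL))) with (eps * Wm / (2 * aL)) by (field; lra).
    apply Rle_trans with (Rabs (pV (z u)) / (2 * aL)).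
    - unfold Rdiv. apply Rmult_le_compat_l; [apply Rabs_pos|]. apply Rinv_le_contravar; [lra|].
      destruct i; lra.
    - unfold Rdiv. apply Rmult_le_compat_r; [left; apply Rinv_0_lt_compat; lra|lra]. }
  assert (cm : 0 <= cmax) by lra.
  assert (fr : forall a a0, Rabs (a - a0) <= eps * (K1 m1 aL Wm cmin cmax + K2 m1 m2 aL Wm cmin cmax) ->
     0 <= a0 <= cmax ->
     Rabs (a / (2 * (if i then pX (z u) else 1 - pX (z u))) - a0 / (2 * (if i then pX (z 0) else 1 - pX (z 0))))
     <= eps * ((K1 m1 aL Wm cmin cmax + K2 m1 m2 aL Wm cmin cmax + cmax * KX Wm cmin) / (2 * aL ^ 2))).
  { intros a a0 ha ha0. eapply Rle_trans; [apply (frac_diff aL cmax); try lra; destruct i; lra|].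
    replace (eps * ((K1 m1 aL Wm cmin cmax + K2 m1 m2 aL Wm cmin cmax + cmax * KX Wm cmin) / (2 * aL ^ 2)))
      with ((eps * (K1 m1 aL Wm cmin cmax + K2 m1 m2 aL Wm cmin cmax) + cmax * (eps * KX Wm cmin)) / (2 * aL ^ 2))
      by (field; lra).
    unfold Rdiv. apply Rmult_le_compat_r; [left; apply Rinv_0_lt_compat; lra|].
    assert (Rabs ((if i then pX (z u) else 1 - pX (z u)) - (if i then pX (z 0) else 1 - pX (z 0)))
       <= eps * KX Wm cmin).
    { destruct i; auto. replace (1 - pX (z u) - (1 - pX (z 0))) with (- (pX (z u) - pX (z 0))) by ring.
      rewrite Rabs_Ropp; auto. }
    nra. }
  unfold Lp. rewrite Rmult_plus_distr_l.
  destruct i; unfold A1, A2, B1, B2.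
  - apply Rplus_le_compat; [|exact bB]. apply fr; [nra|split; [apply Rabs_pos|lra]].
  - apply Rplus_le_compat; [|exact bB]. apply fr; [nra|split; [apply Rabs_pos|lra]].
Qed.

Lemma phi_eps (i : bool) m1 m2 aL Wm cmin cmax eps z t1 t : Env m1 m2 aL Wm cmin cmax eps z t1 -> 0 <= t <= t1 ->
  dcirc ((if i then phi1 else phi2) (z t))
        ((if i then phi1 else phi2) (z 0) + (if i then A1 else A2) (z 0) * t)
    <= eps * Kp m1 m2 aL Wm cmin cmax.
Proof.
  intros E ht. envfacts E. destruct (t_hi _ _ _ _ _ _ _ _ _ t E ht) as [hh [th tb]].
  destruct (phi_ang i _ _ _ _ _ _ _ _ _ 0 t ((if i then A1 else A2) (z 0)) (eps * Lp m1 m2 aL Wm cmin cmax)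
     IsInt E ltac:(lra) ltac:(lra) IsInt0 IsInt_add) as [k [[n ->] Hk]].
  - intros s Hs. destruct (E_G _ _ _ _ _ _ _ _ _ E s ltac:(lra)) as [g1 _]. destruct i.
    + destruct (phi1_coll m1 m2 eps (z s) ltac:(lra)) as [h _]. exact h.
    + apply (phi2_coll m1 m2 eps (z s)). lra.
  - intros u Hu. apply (Lp_bound i _ _ _ _ _ _ _ _ _ u E). lra.
  - eapply Rle_trans; [apply (dcirc_int _ _ n)|].
    replace ((if i then phi1 else phi2) (z t) - ((if i then phi1 else phi2) (z 0) + (if i then A1 else A2) (z 0) * t) - IZR n)
      with ((if i then phi1 else phi2) (z t) - (if i then phi1 else phi2) (z 0) - IZR n - (if i then A1 else A2) (z 0) * (t - 0))
      by ring.
    eapply Rle_trans; [exact Hk|]. unfold Kp.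
    assert (0 <= eps * Lp m1 m2 aL Wm cmin cmax).
    { pose proof (Rabs_pos ((if i then phi1 else phi2) (z t) - (if i then phi1 else phi2) (z 0) - IZR n -
        (if i then A1 else A2) (z 0) * (t - 0))).
      destruct (Req_dec t 0) as [e|e].
      - pose proof (Lp_bound i _ _ _ _ _ _ _ _ _ 0 E ltac:(lra)).
        pose proof (Rabs_pos ((if i then A1 else A2) (z 0) - (if i then A1 else A2) (z 0))).
        assert (0 <= (if i then B1 else B2) (z 0)).
        { destruct (E_G _ _ _ _ _ _ _ _ _ E 0 ltac:(lra)) as [gx _].
          destruct i; unfold B1, B2; apply Rmult_le_pos; try apply Rabs_pos; left; apply Rinv_0_lt_compat; lra. }
        lra.
      - nra. }
    rewrite Rminus_0_r. rewrite <- Rmult_assoc. apply Rmult_le_compat_l; lra.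
Qed.

Lemma K_nonneg m1 m2 aL Wm cmin cmax : 0 < m1 -> 0 < m2 -> 0 < aL -> 0 < cmin <= cmax -> 1 <= Wm ->
  0 <= K1 m1 aL Wm cmin cmax /\ 0 <= K2 m1 m2 aL Wm cmin cmax /\ 0 <= KW m1 m2 aL cmin cmax /\
  0 <= KX Wm cmin /\ 0 <= Kp m1 m2 aL Wm cmin cmax.
Proof.
  intros h1 h2 h3 h4 h5.
  assert (tb : 0 < Tb cmin) by (unfold Tb; apply Rmult_lt_0_compat; [lra|apply Rinv_0_lt_compat; lra]).
  assert (hh : 0 < hi0 aL cmin cmax) by (unfold hi0; apply Rmult_lt_0_compat; [lra|apply Rinv_0_lt_compat; lra]).
  assert (nn : 0 < Nn aL cmin cmax) by (unfold Nn; nra).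
  assert (a : 0 <= m1 * cmax) by nra. assert (b : 0 <= m2 * cmax) by nra.
  assert (k1 : 0 <= K1 m1 aL Wm cmin cmax) by (unfold K1; apply Rmult_le_pos; lra).
  assert (k2 : 0 <= K2 m1 m2 aL Wm cmin cmax) by (unfold K2; apply Rmult_le_pos; nra).
  assert (kx : 0 <= KX Wm cmin) by (unfold KX; nra).
  split; auto. split; auto. split; [unfold KW, KQ; nra|]. split; auto.
  unfold Kp, Lp. apply Rmult_le_pos; [|lra]. apply Rplus_le_le_0_compat.
  - apply Rmult_le_pos; [nra|left; apply Rinv_0_lt_compat; simpl; nra].
  - apply Rmult_le_pos; [lra|left; apply Rinv_0_lt_compat; lra].
Qed.

Lemma main_env m1 m2 aL Wm cmin cmax eps z t1 t : Env m1 m2 aL Wm cmin cmax eps z t1 -> 0 <= t <= t1 ->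
  zdist eps (z 0) t (z t) <= CstK m1 m2 aL Wm cmin cmax * eps.
Proof.
  intros E ht. envfacts E.
  destruct (K_nonneg m1 m2 aL Wm cmin cmax) as [k1 [k2 [kw [kx kp]]]]; try lra.
  assert (S1 := s1_eps _ _ _ _ _ _ _ _ _ t E ht).
  assert (S2 := s2_eps _ _ _ _ _ _ _ _ _ t E ht).
  assert (SX := X_eps _ _ _ _ _ _ _ _ _ t E ht).
  assert (SW := W_eps _ _ _ _ _ _ _ _ _ t E ht).
  assert (P1 := phi_eps true _ _ _ _ _ _ _ _ _ t E ht).
  assert (P2 := phi_eps false _ _ _ _ _ _ _ _ _ t E ht).
  simpl in P1, P2. unfold A1 in P1. unfold A2 in P2.
  unfold zdist, hstate, hX, hW, hs1, hs2; cbn [fst snd].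
  unfold CstK.
  repeat apply Rmax_lub; nra.
Qed.

Lemma lin_nonneg g0 r : 0 <= g0 -> (g0 = 0 -> 0 < r) ->
  exists d, 0 < d /\ forall tau, 0 <= tau <= d -> 0 <= g0 + tau * r.
Proof.
  intros h1 h2. destruct (Req_dec g0 0) as [e|e].
  - specialize (h2 e). exists 1. split; [lra|]. intros. nra.
  - exists (g0 / (Rabs r + 1)). pose proof (Rabs_pos r).
    split. apply Rdiv_lt_0_compat; lra.
    intros tau ht. assert (tau * (Rabs r + 1) <= g0).
    { destruct ht as [_ ht]. apply Rmult_le_compat_r with (r := Rabs r + 1) in ht; [|lra].
      replace (g0 / (Rabs r + 1) * (Rabs r + 1)) with g0 in ht by (field; lra). lra. }
    assert (- (tau * Rabs r) <= tau * r).
    { unfold Rabs; destruct Rcase_abs; nra. }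
    nra.
Qed.

Lemma adm_free c : admissible c ->
  (px1 c = 0 -> 0 < pv1 c) -> (px1 c = pX c -> pv1 c < pV c) ->
  (px2 c = pX c -> pV c < pv2 c) -> (px2 c = 1 -> pv2 c < 0) ->
  exists d, 0 < d /\ forall tau, 0 <= tau <= d -> admissible (free tau c).
Proof.
  intros [[a1 a2] [a3 a4]] o1 o2 o3 o4.
  destruct (lin_nonneg (px1 c) (pv1 c)) as [d1 [p1 H1]]; [lra|auto|].
  destruct (lin_nonneg (pX c - px1 c) (pV c - pv1 c)) as [d2 [p2 H2]]; [lra|intros; specialize (o2 ltac:(lra)); lra|].
  destruct (lin_nonneg (px2 c - pX c) (pv2 c - pV c)) as [d3 [p3 H3]]; [lra|intros; specialize (o3 ltac:(lra)); lra|].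
  destruct (lin_nonneg (1 - px2 c) (- pv2 c)) as [d4 [p4 H4]]; [lra|intros; specialize (o4 ltac:(lra)); lra|].
  exists (Rmin (Rmin d1 d2) (Rmin d3 d4)).
  assert (Rmin (Rmin d1 d2) (Rmin d3 d4) <= Rmin d1 d2) by apply Rmin_l.
  assert (Rmin (Rmin d1 d2) (Rmin d3 d4) <= Rmin d3 d4) by apply Rmin_r.
  assert (Rmin d1 d2 <= d1) by apply Rmin_l. assert (Rmin d1 d2 <= d2) by apply Rmin_r.
  assert (Rmin d3 d4 <= d3) by apply Rmin_l. assert (Rmin d3 d4 <= d4) by apply Rmin_r.
  split. apply Rmin_pos; apply Rmin_pos; auto.
  intros tau ht. specialize (H1 tau ltac:(lra)). specialize (H2 tau ltac:(lra)).
  specialize (H3 tau ltac:(lra)). specialize (H4 tau ltac:(lra)).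
  unfold admissible, free; cbn [pX pV px1 pv1 px2 pv2]. lra.
Qed.

Lemma frac1 : frac_part 1 = 0.
Proof.
  destruct (Int_part_frac_part_spec 1 1%Z 0 ltac:(lra) ltac:(simpl; lra)) as [_ h]. auto.
Qed.

Lemma build_env m1 m2 aL Wm cmin cmax eps z t1 :
  0 < m1 -> 0 < m2 -> 0 < aL < 1/2 -> 0 < cmin <= cmax -> 1 <= Wm -> 0 < eps <= 1 ->
  eps * Wm + 2 * m1 * eps ^ 2 * (cmax + eps * Wm) < cmin / 4 ->
  is_motion m1 m2 (MM eps) z -> 0 <= t1 -> admissible (z 0) ->
  Gd aL Wm cmin cmax eps (z 0) ->
  (forall u, 0 <= u < t1 -> Gd aL Wm cmin cmax eps (z u)) ->
  (forall s, 0 < s < t1 -> ~ angle0 (phi1 (z s))) ->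
  Env m1 m2 aL Wm cmin cmax eps z t1.
Proof.
  intros hm1 hm2 ha hc hW he hsm hmot ht1 ad0 G0 Gl Ang.
  assert (e2 : 0 <= eps ^ 2) by (apply pow_le; lra).
  assert (ew : eps * Wm < cmin / 4).
  { assert (0 <= 2 * m1 * eps ^ 2 * (cmax + eps * Wm)) by (apply Rmult_le_pos; [nra|nra]). lra. }
  assert (G : forall u, 0 <= u <= t1 -> Gd aL Wm cmin cmax eps (z u)).
  { intros u hu. destruct (Req_dec u t1) as [e|e]; [|apply Gl; lra]. subst u.
    destruct (Req_dec t1 0) as [e0|e0]. rewrite e0; auto.
    destruct (mot_left _ _ _ _ t1 hmot ltac:(lra)) as [d [dp Hd]].
    set (d' := Rmin d t1). assert (0 < d') by (apply Rmin_pos; lra).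
    assert (d' <= d) by apply Rmin_l. assert (d' <= t1) by apply Rmin_r.
    assert (HH : forall u, t1 - d' < u < t1 -> Gd aL Wm cmin cmax eps (z u) /\ z u = free (u - t1) (z t1)).
    { intros w hw. split; [apply Gl; lra|apply Hd; lra]. }
    destruct (HH (t1 - d'/2) ltac:(lra)) as [[_ [gv [g1 g2]]] zu].
    rewrite zu in gv, g1, g2. cbn [free pV pv1 pv2] in gv, g1, g2.
    split; [split|split; [auto|split; auto]].
    - apply (lc_ge t1 d' aL (pX (z t1)) (pV (z t1))); auto. intros w hw.
      destruct (HH w hw) as [[[gx _] _] zu']. rewrite zu' in gx. cbn [free pX] in gx. lra.
    - apply (lc_le t1 d' (1 - aL) (pX (z t1)) (pV (z t1))); auto. intros w hw.
      destruct (HH w hw) as [[[_ gx] _] zu']. rewrite zu' in gx. cbn [free pX] in gx. lra. }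
  assert (Gp : forall s, 0 <= s < t1 -> Gd aL Wm cmin cmax eps (coll m1 m2 (MM eps) (z s))).
  { intros s hs. destruct (mot_right _ _ _ _ s hmot ltac:(lra)) as [d [dp Hd]].
    set (d' := Rmin d (t1 - s)). assert (0 < d') by (apply Rmin_pos; lra).
    assert (d' <= d) by apply Rmin_l. assert (d' <= t1 - s) by apply Rmin_r.
    destruct (G (s + d'/2) ltac:(lra)) as [_ [gv [g1 g2]]].
    rewrite (Hd (s + d'/2) ltac:(lra)) in gv, g1, g2. cbn [free pV pv1 pv2] in gv, g1, g2.
    destruct (G s ltac:(lra)) as [gx _].
    destruct (coll_pos m1 m2 (MM eps) (z s)) as [p1 _].
    split; [rewrite p1; auto|auto]. }
  assert (Adm : forall u, 0 <= u <= t1 -> admissible (z u)).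
  { intros u hu. apply (RI 0 u (fun u => admissible (z u))); [lra|auto| |].
    - intros s hs ads. destruct (mot_right _ _ _ _ s hmot ltac:(lra)) as [d [dp Hd]].
      destruct (G s ltac:(lra)) as [[gx1 gx2] [gv [[g11 g12] [g21 g22]]]].
      destruct (Gp s ltac:(lra)) as [_ [cv [[c11 c12] [c21 c22]]]].
      destruct (coll_pos m1 m2 (MM eps) (z s)) as [p1 [p2 p3]].
      destruct (coll_out m1 m2 eps (z s) cmin hm1 hm2 ltac:(lra) ltac:(lra) ltac:(lra)
        ltac:(lra) ltac:(lra)) as [o1 [o2 [o3 o4]]].
      + assert (m1 * eps ^ 2 * (Rabs (pv1 (z s)) + Rabs (pV (z s))) <= m1 * eps ^ 2 * (cmax + eps * Wm))
          by (apply Rmult_le_compat_l; [nra|lra]). lra.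
      + lra.
      + set (c := coll m1 m2 (MM eps) (z s)) in *.
        destruct (adm_free c) as [da [dap Ha]].
        * unfold admissible. rewrite p1, p2, p3. exact ads.
        * rewrite p2; auto.
        * rewrite p1, p2; auto.
        * rewrite p1, p3; auto.
        * rewrite p3; auto.
        * exists (Rmin d da). split; [apply Rmin_pos; auto|]. intros w hw _.
          assert (Rmin d da <= d) by apply Rmin_l. assert (Rmin d da <= da) by apply Rmin_r.
          rewrite (Hd w ltac:(lra)). apply Ha. lra.
    - intros s hs Hb. destruct (mot_left _ _ _ _ s hmot ltac:(lra)) as [d [dp Hd]].
      set (d' := Rmin d s). assert (0 < d') by (apply Rmin_pos; lra).
      assert (d' <= d) by apply Rmin_l. assert (d' <= s) by apply Rmin_r.
      assert (HH : forall w, s - d' < w < s -> admissible (free (w - s) (z s))).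
      { intros w hw. rewrite <- (Hd w ltac:(lra) ltac:(lra)). apply Hb. lra. }
      unfold admissible. split; split.
      + apply (lc_ge s d' 0 (px1 (z s)) (pv1 (z s))); auto. intros w hw.
        destruct (HH w hw) as [[h1 h2] [h3 h4]]. cbn [free pX px1 px2] in *. lra.
      + assert (0 <= pX (z s) - px1 (z s)); [|lra].
        apply (lc_ge s d' 0 _ (pV (z s) - pv1 (z s))); auto. intros w hw.
        destruct (HH w hw) as [[h1 h2] [h3 h4]]. cbn [free pX px1 px2] in *. lra.
      + assert (0 <= px2 (z s) - pX (z s)); [|lra].
        apply (lc_ge s d' 0 _ (pv2 (z s) - pV (z s))); auto. intros w hw.
        destruct (HH w hw) as [[h1 h2] [h3 h4]]. cbn [free pX px1 px2] in *. lra.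
      + apply (lc_le s d' 1 (px2 (z s)) (pv2 (z s))); auto. intros w hw.
        destruct (HH w hw) as [[h1 h2] [h3 h4]]. cbn [free pX px1 px2] in *. lra. }
  assert (Nz : forall s, 0 < s < t1 -> px1 (z s) <> 0).
  { intros s hs e. apply (Ang s hs). destruct (G s ltac:(lra)) as [[gx _] _].
    unfold angle0. destruct (phi1_zero (z s) e ltac:(lra)) as [p|p]; rewrite p; [apply fp_R0|apply frac1]. }
  constructor; auto; lra.
Qed.


Lemma t1_facts eps (Vs : slow -> Prop) (hbar : R -> slow) z T : 0 < eps -> 0 < T ->
  Rbar_le (t1_eps z) (Rbar_mult (Rbar_min (Finite T) (T_eps eps Vs hbar z)) (Finite (/ eps))) ->
  exists t1, t1_eps z = Finite t1 /\ 0 <= t1 /\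
    (forall u, 0 <= u < t1 -> Vs (hstate eps (z u))) /\
    (forall s, 0 < s < t1 -> ~ angle0 (phi1 (z s))).
Proof.
  intros he hT H.
  destruct (Glb_Rbar_correct (fun t => 0 < t /\ angle0 (phi1 (z t)))) as [lb1 _].
  destruct (Glb_Rbar_correct (fun tau => 0 <= tau /\
    (~ Vs (hbar tau) \/ ~ Vs (hstate eps (z (tau / eps)))))) as [lbT _].
  fold (t1_eps z) in lb1. fold (T_eps eps Vs hbar z) in lbT.
  assert (z1 : Rbar_le (Finite 0) (t1_eps z)).
  { destruct (Glb_Rbar_correct (fun t => 0 < t /\ angle0 (phi1 (z t)))) as [_ g].
    apply g. intros x [hx _]. simpl. lra. }
  assert (zT : Rbar_le (Finite 0) (T_eps eps Vs hbar z)).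
  { destruct (Glb_Rbar_correct (fun tau => 0 <= tau /\
    (~ Vs (hbar tau) \/ ~ Vs (hstate eps (z (tau / eps)))))) as [_ g].
    apply g. intros x [hx _]. simpl. lra. }
  assert (hbound : exists B, Rbar_le (t1_eps z) (Finite B) /\
     forall tau, 0 <= tau -> (~ Vs (hbar tau) \/ ~ Vs (hstate eps (z (tau / eps)))) -> B <= tau / eps).
  { destruct (T_eps eps Vs hbar z) as [te| |] eqn:eT.
    - exists (Rmin T te * / eps). split.
      + simpl in H. exact H.
      + intros tau h0 h1. assert (Rbar_le (Finite te) (Finite tau)) by (apply lbT; split; auto).
        simpl in H0. assert (Rmin T te <= te) by apply Rmin_r.
        unfold Rdiv. apply Rmult_le_compat_r; [left; apply Rinv_0_lt_compat; lra|lra].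
    - exists (T * / eps). split.
      + simpl in H. exact H.
      + intros tau h0 h1. assert (Rbar_le p_infty (Finite tau)) by (apply lbT; split; auto).
        simpl in H0. contradiction.
    - simpl in zT. contradiction. }
  destruct hbound as [B [hB hB2]].
  destruct (t1_eps z) as [t1| |] eqn:et.
  - exists t1. split; auto. split; [simpl in z1; lra|]. split.
    + intros u hu. destruct (classic (Vs (hstate eps (z u)))) as [v|v]; auto. exfalso.
      assert (B <= u * eps / eps).
      { apply hB2. nra. right. replace (u * eps / eps) with u by (field; lra). auto. }
      replace (u * eps / eps) with u in H0 by (field; lra). simpl in hB. lra.
    + intros s hs ha. assert (Rbar_le (Finite t1) (Finite s)) by (apply lb1; split; [lra|auto]).
      simpl in H0. lra.
  - simpl in hB. contradiction.
  - simpl in z1. contradiction.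
Qed.

Lemma Gd_of_Vs (A B C : R -> Prop) (Vs : slow -> Prop) aL Wm cmin cmax eps st :
  (forall h, Vs h -> A (hX h) /\ B (hW h) /\ C (hs1 h) /\ C (hs2 h)) ->
  (forall x, A x -> aL <= x <= 1 - aL) -> (forall x, B x -> Rabs x <= Wm) ->
  (forall x, C x -> cmin <= x <= cmax) -> 0 < eps ->
  Vs (hstate eps st) -> Gd aL Wm cmin cmax eps st.
Proof.
  intros HV hA hB hC he hv. destruct (HV _ hv) as [a [b [c1 c2]]].
  unfold hstate, hX, hW, hs1, hs2 in a, b, c1, c2; cbn [fst snd] in a, b, c1, c2.
  split; [apply hA; auto|]. split; [|split; apply hC; auto].
  specialize (hB _ b). unfold Rdiv in hB. rewrite Rabs_mult, Rabs_inv, (Rabs_right eps) in hB by lra.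
  apply (Rmult_le_compat_r eps) in hB; [|lra].
  rewrite Rmult_assoc, Rinv_l, Rmult_1_r in hB by lra. lra.
Qed.

Theorem mainTheorem9
  (m1 m2 : R) (Hm1 : 0 < m1) (Hm2 : 0 < m2)
  (A B C : R -> Prop) (Vs : slow -> Prop)
  (cA : compactR A) (cB : compactR B) (cC : compactR C) (cV : compact4 Vs)
  (HA : forall x, A x -> 0 < x < 1) (HC : forall x, C x -> 0 < x)
  (HV : forall h, Vs h -> A (hX h) /\ B (hW h) /\ C (hs1 h) /\ C (hs2 h))
  (T : R) (HT : 0 < T) :
  exists eps1 Cst : R, 0 < eps1 /\ 0 < Cst /\
    forall eps : R, 0 < eps <= eps1 ->
    forall (z : R -> pstate) (hbar : R -> slow),
      is_motion m1 m2 (/ (eps ^ 2)) z ->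
      admissible (z 0) ->
      Vs (hstate eps (z 0)) ->
      angle0 (phi1 (z 0)) ->
      solves_avg m1 m2 hbar (hstate eps (z 0)) ->
      Rbar_le (t1_eps z)
        (Rbar_mult (Rbar_min (Finite T) (T_eps eps Vs hbar z)) (Finite (/ eps))) ->
      forall t : R, 0 <= t -> Rbar_le (Finite t) (t1_eps z) ->
        zdist eps (z 0) t (z t) <= Cst * eps.
Proof.
  destruct (classic (exists h, Vs h)) as [[h0 Vh0]|nV].
  2: { exists 1, 1. split; [lra|]. split; [lra|]. intros eps _ z hbar _ _ hv. exfalso. apply nV. eauto. }
  destruct (HV h0 Vh0) as [Ah [Bh [Ch _]]].
  destruct (Aux.compact_minmax A cA (ex_intro _ _ Ah)) as [loA [hiA [ALo [AHi Abd]]]].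
  destruct (Aux.compact_minmax B cB (ex_intro _ _ Bh)) as [loB [hiB [BLo [BHi Bbd]]]].
  destruct (Aux.compact_minmax C cC (ex_intro _ _ Ch)) as [loC [hiC [CLo [CHi Cbd]]]].
  pose proof (HA _ ALo). pose proof (HA _ AHi). pose proof (HC _ CLo).
  pose proof (Cbd _ CLo).
  set (aL := Rmin (loA / 2) ((1 - hiA) / 2)).
  assert (aL1 : aL <= loA / 2) by apply Rmin_l. assert (aL2 : aL <= (1 - hiA) / 2) by apply Rmin_r.
  assert (aL0 : 0 < aL) by (apply Rmin_pos; lra).
  set (Wm := Rmax (Rabs loB) (Rabs hiB) + 1).
  assert (W1 : Rabs loB <= Rmax (Rabs loB) (Rabs hiB)) by apply Rmax_l.
  assert (W2 : Rabs hiB <= Rmax (Rabs loB) (Rabs hiB)) by apply Rmax_r.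
  assert (Wp : 1 <= Wm) by (unfold Wm; pose proof (Rabs_pos loB); lra).
  set (cmin := loC). set (cmax := hiC).
  set (Dn := Wm + 2 * m1 * (cmax + Wm)).
  assert (Dp : 0 < Dn) by (unfold Dn; assert (0 < m1 * (cmax + Wm)) by (apply Rmult_lt_0_compat; unfold cmax, cmin in *; lra); lra).
  exists (Rmin 1 (cmin / (8 * Dn))), (CstK m1 m2 aL Wm cmin cmax).
  assert (ep1 : 0 < Rmin 1 (cmin / (8 * Dn))).
  { apply Rmin_pos; [lra|]. apply Rdiv_lt_0_compat; unfold cmin; lra. }
  split; auto. split.
  { destruct (K_nonneg m1 m2 aL Wm cmin cmax) as [k1 [k2 [kw [kx kp]]]]; try (unfold cmin, cmax in *; lra).
    unfold CstK. lra. }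
  intros eps [he he1] z hbar hmot had0 hV0 hang0 hsol hle t ht htl.
  assert (e1 : eps <= 1) by (pose proof (Rmin_l 1 (cmin / (8 * Dn))); lra).
  assert (e2 : eps <= cmin / (8 * Dn)) by (pose proof (Rmin_r 1 (cmin / (8 * Dn))); lra).
  destruct (t1_facts eps Vs hbar z T he HT hle) as [t1 [et1 [t1p [HVs HAng]]]].
  rewrite et1 in htl. simpl in htl.
  assert (hA : forall x, A x -> aL <= x <= 1 - aL) by (intros x hx; destruct (Abd x hx); lra).
  assert (hB : forall x, B x -> Rabs x <= Wm).
  { intros x hx. destruct (Bbd x hx). unfold Wm.
    pose proof (Rabs_maj2 loB). pose proof (Rle_abs hiB).
    unfold Rabs at 1; destruct Rcase_abs; lra. }
  assert (hC : forall x, C x -> cmin <= x <= cmax) by (intros x hx; apply Cbd; auto).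
  assert (small : eps * Wm + 2 * m1 * eps ^ 2 * (cmax + eps * Wm) < cmin / 4).
  { assert (eDn : eps * Dn <= cmin / 8).
    { apply (Rmult_le_compat_r Dn) in e2; [|lra].
      replace (cmin / (8 * Dn) * Dn) with (cmin / 8) in e2 by (field; lra). lra. }
    assert (eps ^ 2 <= eps) by (apply eps2_le; lra).
    assert (2 * m1 * eps ^ 2 * (cmax + eps * Wm) <= 2 * m1 * eps * (cmax + Wm)).
    { assert (0 <= eps ^ 2) by (apply pow_le; lra).
      assert (0 < cmax) by (unfold cmax, cmin in *; lra).
      assert (eps * Wm <= Wm) by nra.
      apply Rmult_le_compat; nra. }
    unfold Dn in eDn. unfold cmin in *. nra. }
  assert (E : Env m1 m2 aL Wm cmin cmax eps z t1).
  { apply build_env; auto; try lra.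
    - unfold cmin, cmax; lra.
    - apply (Gd_of_Vs A B C Vs); auto.
    - intros u hu. apply (Gd_of_Vs A B C Vs); auto. }
  apply (main_env m1 m2 aL Wm cmin cmax eps z t1 t E). lra.
Qed.
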